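(* Let $C_0\ge1$. There is a constant $M$ depending only on $C_0$ such that the following holds. Let $k,k'$ be positive integers and $w>0$ with $$0<k'-k\le C_0w^{-1},\qquad w^{-1}\le C_0k .$$ Let $f=\cos(kx)e^{-kt}$, $g=\cos(k'y)e^{-k't}$ (both harmonic in $\mathbb{T}^2\times\mathbb{R}$), put $\alpha(t)=\theta(t/w)$ and $$u=\begin{cases}f+(1-\alpha(t))g,& t\le w,\\ \alpha(t-w)f+g,& t\ge w.\end{cases}$$ Then: (a) there is a $C^1$ real $2\times2$ matrix-valued function $A(x,y,t)$ on $\mathbb{T}^2\times\mathbb{R}$, equal to the identity for $t\le0$ and $t\ge 2w$, such that $\ddot u+\operatorname{div}(A\nabla u)=0$ on $\mathbb{T}^2\times\mathbb{R}$; (b) on $\mathbb{T}^2\times\mathbb{R}$, $\|A-\mathrm{Id}\|\le \frac{M}{wk}$, $\|\nabla A\|\le\frac{M}{w}$ and $\|\dot A\|\le\frac Mw$; (c) for every multi-index $\beta\in\mathbb{N}^3$ (derivatives in $x,y,t$) with $|\beta|\le2$ and every $(x,y,t)\in\mathbb{T}^2\times[0,2w]$, $$|\partial^\beta u(x,y,t)|\le M(k')^{|\beta|}\sup_{\mathbb{T}^2\times[0,2w]}|u|.$$ In particular $u=f$ for $t\le0$ and $u=g$ for $t\ge2w$.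
   Context: $\mathbb{T}^2=(\mathbb{R}/2\pi\mathbb{Z})^2$ with coordinates $(x,y)$, $t$ the third coordinate. For a real $2\times2$ matrix function $A(x,y,t)$, $\ddot u+\operatorname{div}(A\nabla u)$ means $\partial_t^2u+\sum_{i,j\in\{x,y\}}\partial_i(A_{ij}\partial_ju)$; $\nabla A$ denotes the spatial $(x,y)$-derivatives of the entries of $A$ and $\dot A=\partial_tA$. The function $\theta:\mathbb{R}\to[0,1]$ is defined by $\theta(t)=1$ for $t\le0$, $\theta(t)=0$ for $t\ge1$, and $\theta(t)=1-G(\tan(\pi(t-1/2)))$ for $t\in(0,1)$, where $G(s)=\pi^{-1/2}\int_{-\infty}^se^{-\eta^2}\,d\eta$; it is $C^\infty$, monotonically decreasing on $(0,1)$. *)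

(* Defs.v *)
From Stdlib Require Import Reals Lra List.
From Coquelicot Require Import Coquelicot.
Open Scope R_scope.

Definition G (s : R) : R :=
  / sqrt PI * RInt_gen (fun eta => exp (- eta ^ 2)) (Rbar_locally m_infty) (at_point s).

Definition theta (t : R) : R :=
  if Rle_dec t 0 then 1
  else if Rle_dec 1 t then 0
  else 1 - G (tan (PI * (t - / 2))).

(* functions on T^2 x R, represented as functions of (x,y,t) in R^3 *)
Definition fn3 := R -> R -> R -> R.

Inductive dir := Dx | Dy | Dt.
Inductive sdir := Sx | Sy.
Definition sdir_to_dir (i : sdir) : dir := match i with Sx => Dx | Sy => Dy end.
Coercion sdir_to_dir : sdir >-> dir.

Definition pd (d : dir) (F : fn3) : fn3 :=
  match d with
  | Dx => fun x y t => Derive (fun s => F s y t) x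
  | Dy => fun x y t => Derive (fun s => F x s t) y
  | Dt => fun x y t => Derive (fun s => F x y s) t
  end.

Definition ex_pd (d : dir) (F : fn3) (x y t : R) : Prop :=
  match d with
  | Dx => ex_derive (fun s => F s y t) x
  | Dy => ex_derive (fun s => F x s t) y
  | Dt => ex_derive (fun s => F x y s) t
  end.

Fixpoint pdl (beta : list dir) (F : fn3) : fn3 :=
  match beta with
  | nil => F
  | d :: b => pd d (pdl b F)
  end.

Definition cont3 (F : fn3) : Prop :=
  forall x y t eps, 0 < eps -> exists delta, 0 < delta /\
    forall x' y' t', Rabs (x' - x) < delta -> Rabs (y' - y) < delta -> Rabs (t' - t) < delta ->
      Rabs (F x' y' t' - F x y t) < eps.

Definition is_C1 (F : fn3) : Prop :=
  cont3 F /\ forall d, (forall x y t, ex_pd d F x y t) /\ cont3 (pd d F).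

(* 2pi-periodic in x and y, i.e. a function on T^2 x R *)
Definition periodic2 (F : fn3) : Prop :=
  forall x y t, F (x + 2 * PI) y t = F x y t /\ F x (y + 2 * PI) t = F x y t.

Definition delta (i j : sdir) : R :=
  match i, j with Sx, Sx | Sy, Sy => 1 | _, _ => 0 end.

Definition wave_op (A : sdir -> sdir -> fn3) (u : fn3) : fn3 :=
  fun x y t =>
    pd Dt (pd Dt u) x y t
    + pd Dx (fun x y t => A Sx Sx x y t * pd Dx u x y t + A Sx Sy x y t * pd Dy u x y t) x y t
    + pd Dy (fun x y t => A Sy Sx x y t * pd Dx u x y t + A Sy Sy x y t * pd Dy u x y t) x y t.

Definition f_fun (k : nat) : fn3 := fun x y t => cos (INR k * x) * exp (- INR k * t).
Definition g_fun (k' : nat) : fn3 := fun x y t => cos (INR k' * y) * exp (- INR k' * t).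

Definition u_fun (k k' : nat) (w : R) : fn3 := fun x y t =>
  if Rle_dec t w then f_fun k x y t + (1 - theta (t / w)) * g_fun k' x y t
  else theta ((t - w) / w) * f_fun k x y t + g_fun k' x y t.

(* Main.v *)
Require Import Defs.
From Stdlib Require Import Reals Lra Lia List FunctionalExtensionality.
From Coquelicot Require Import Coquelicot.
Open Scope R_scope.


Definition gauss (x : R) : R := exp (- x ^ 2).

Lemma gauss_cont x : continuous gauss x.
Proof. apply (@ex_derive_continuous R_AbsRing R_NormedModule). unfold gauss. auto_derive. easy. Qed.

Lemma gauss_ex_RInt a b : ex_RInt gauss a b.
Proof. apply (@ex_RInt_continuous R_CompleteNormedModule). intros; apply gauss_cont. Qed.

Definition P (x : R) : R := RInt gauss 0 x.

Lemma P_deriv x : is_derive P x (gauss x).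
Proof.
  apply is_derive_RInt with (a:=0).
  apply filter_forall. intros b. apply (@RInt_correct R_CompleteNormedModule), gauss_ex_RInt.
  apply gauss_cont.
Qed.

Definition Hf (x : R) : R := RInt (fun t => exp (- (x^2) * (1 + t^2)) / (1 + t^2)) 0 1.

Definition hf (u t : R) : R := exp (- (u^2) * (1 + t^2)) / (1 + t^2).

Lemma hf_Derive u t : Derive (fun z => hf z t) u = -2 * u * exp (- (u^2) * (1 + t^2)).
Proof.
  apply is_derive_unique. unfold hf. auto_derive.
  - nra.
  - replace (u*(u*1)) with (u^2) by ring. replace (t*(t*1)) with (t^2) by ring.
    field. nra.
Qed.

Lemma cont_exp x : continuity_pt exp x.
Proof. apply derivable_continuous_pt, derivable_pt_exp. Qed.

Lemma hf_cont2 x t : continuity_2d_pt (fun u v => Derive (fun z => hf z v) u) x t.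
Proof.
  apply continuity_2d_pt_ext with (f := fun u v => (-2 * u) * exp (- (u^2) * (1 + v^2))).
  { intros; rewrite hf_Derive; ring. }
  apply continuity_2d_pt_mult.
  - apply continuity_2d_pt_mult. apply continuity_2d_pt_const. apply continuity_2d_pt_id1.
  - apply continuity_1d_2d_pt_comp. apply cont_exp.
    apply continuity_2d_pt_mult.
    + apply continuity_2d_pt_opp. simpl.
      apply continuity_2d_pt_mult. apply continuity_2d_pt_id1.
      apply continuity_2d_pt_mult. apply continuity_2d_pt_id1. apply continuity_2d_pt_const.
    + apply continuity_2d_pt_plus. apply continuity_2d_pt_const.
      simpl. apply continuity_2d_pt_mult. apply continuity_2d_pt_id2.
      apply continuity_2d_pt_mult. apply continuity_2d_pt_id2. apply continuity_2d_pt_const.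
Qed.

Lemma hf_ex_RInt u a b : ex_RInt (fun t => hf u t) a b.
Proof.
  apply (@ex_RInt_continuous R_CompleteNormedModule). intros.
  apply (@ex_derive_continuous R_AbsRing R_NormedModule). unfold hf. auto_derive. nra.
Qed.

Lemma Hf_deriv x : is_derive Hf x (-2 * gauss x * P x).
Proof.
  unfold Hf.
  assert (H := is_derive_RInt_param hf 0 1 x).
  replace (-2 * gauss x * P x) with (RInt (fun t : R => Derive (fun u : R => hf u t) x) 0 1).
  apply H.
  - apply filter_forall. intros y t _. unfold hf. auto_derive. nra.
  - intros; apply hf_cont2.
  - apply filter_forall. intros y. apply hf_ex_RInt.
  - rewrite (RInt_ext _ (fun t => scal (-2 * gauss x) (scal x (gauss (x * t + 0))))).
    2:{ intros t _. rewrite hf_Derive. unfold gauss, scal; simpl; unfold mult; simpl.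
        transitivity (-2*x*(exp (-(x*(x*1))) * exp (-((x*t+0)*((x*t+0)*1))))).
        f_equal. rewrite <- exp_plus. f_equal. ring. ring. }
    rewrite (@RInt_scal R_CompleteNormedModule).
    2:{ apply (@ex_RInt_continuous R_CompleteNormedModule). intros.
        apply (@ex_derive_continuous R_AbsRing R_NormedModule). unfold scal; simpl; unfold mult; simpl. unfold gauss. auto_derive. easy. }
    rewrite (@RInt_comp_lin R_CompleteNormedModule).
    2: apply gauss_ex_RInt.
    unfold P. unfold scal; simpl; unfold mult; simpl.
    rewrite Rmult_0_r, Rplus_0_r, Rmult_1_r, Rplus_0_r. reflexivity.
Qed.

Lemma ballR (x : R) (e : R) (y : R) : @ball R_UniformSpace x e y <-> Rabs (y - x) < e.
Proof. split; intro H; exact H. Qed.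

Lemma P0 : P 0 = 0.
Proof. unfold P. rewrite RInt_point. reflexivity. Qed.

Lemma Hf0 : Hf 0 = PI / 4.
Proof.
  unfold Hf.
  rewrite (RInt_ext _ (fun t => / (1 + t^2))).
  2:{ intros. replace (- (0^2) * (1 + x^2)) with 0 by ring. rewrite exp_0. unfold Rdiv. apply Rmult_1_l. }
  rewrite <- atan_1.
  replace (atan 1) with (atan 1 - atan 0) by (rewrite atan_0; ring).
  apply is_RInt_unique.
  apply (@is_RInt_derive R_CompleteNormedModule atan).
  - intros. apply is_derive_Reals. apply derivable_pt_lim_atan.
  - intros. apply (@ex_derive_continuous R_AbsRing R_NormedModule). auto_derive. nra.
Qed.

Lemma Phi_const x : P x ^ 2 + Hf x = PI / 4.
Proof.
  set (Phi := fun x => P x ^ 2 + Hf x).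
  assert (D : forall y, is_derive Phi y 0).
  { intros y. unfold Phi.
    assert (H1 := P_deriv y). assert (H2 := Hf_deriv y).
    evar (l : R). replace 0 with l.
    apply (@is_derive_plus R_AbsRing R_NormedModule).
    apply (is_derive_pow P 2 y (gauss y) H1). apply H2.
    unfold l, plus; simpl. change (INR 2) with 2. ring. }
  destruct (MVT_gen Phi 0 x (fun _ => 0)) as [c [_ Hc]].
  - intros; apply D.
  - intros. apply continuity_pt_filterlim. apply (@ex_derive_continuous R_AbsRing R_NormedModule).
    exists 0. apply D.
  - change (Phi x = PI/4). replace (Phi x) with (Phi 0) by lra.
    unfold Phi. rewrite P0, Hf0. ring.
Qed.

Lemma Hf_ge0 x : 0 <= Hf x.
Proof.
  unfold Hf. apply RInt_ge_0. lra. apply hf_ex_RInt.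
  intros. apply Rdiv_le_0_compat. apply Rlt_le, exp_pos. nra.
Qed.

Lemma Hf_le x : Hf x <= exp (- x^2).
Proof.
  unfold Hf.
  apply Rle_trans with (RInt (fun _ => exp (- x^2)) 0 1).
  apply RInt_le. lra. apply hf_ex_RInt.
  apply ex_RInt_const.
  intros t Ht.
  apply Rle_trans with (exp (- x ^ 2 * (1 + t ^ 2))).
  { unfold Rdiv. rewrite <- (Rmult_1_r (exp _)) at 2. apply Rmult_le_compat_l.
    apply Rlt_le, exp_pos. rewrite <- Rinv_1. apply Rinv_le_contravar; nra. }
  destruct (Req_dec (- x ^ 2 * (1 + t ^ 2)) (- x^2)) as [E|E].
  rewrite E; lra. apply Rlt_le, exp_increasing. nra.
  rewrite RInt_const. unfold scal; simpl; unfold mult; simpl. lra.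
Qed.

Lemma P_ge0 x : 0 <= x -> 0 <= P x.
Proof.
  intros. unfold P. apply RInt_ge_0. lra. apply gauss_ex_RInt.
  intros. apply Rlt_le, exp_pos.
Qed.

Lemma P_odd x : P (- x) = - P x.
Proof.
  unfold P.
  assert (H := @RInt_comp_lin R_CompleteNormedModule gauss (-1) 0 0 x (gauss_ex_RInt _ _)).
  replace (-1 * 0 + 0) with 0 in H by ring. replace (-1 * x + 0) with (-x) in H by ring.
  rewrite <- H.
  rewrite (RInt_ext _ (fun y => opp (gauss y))).
  2:{ intros. unfold scal; simpl; unfold mult, opp; simpl. unfold gauss.
      replace ((-1 * x0 + 0)^2) with (x0^2) by ring. ring. }
  rewrite (@RInt_opp R_CompleteNormedModule). reflexivity. apply gauss_ex_RInt.
Qed.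

Definition rg : R := sqrt PI / 2.

Lemma rg_pos : 0 < rg.
Proof. unfold rg. assert (0 < sqrt PI) by (apply sqrt_lt_R0, PI_RGT_0). lra. Qed.

Lemma rg_sq : rg * rg = PI / 4.
Proof. unfold rg. assert (H := sqrt_sqrt PI (Rlt_le _ _ PI_RGT_0)). nra. Qed.

Lemma P_close x : 0 <= x -> Rabs (P x - rg) <= exp (- x^2) / rg.
Proof.
  intros Hx. assert (H := Phi_const x). assert (H1 := Hf_le x). assert (H2 := Hf_ge0 x).
  assert (H3 := P_ge0 x Hx). assert (H4 := rg_pos). assert (H5 := rg_sq).
  assert (E : (P x - rg) * (P x + rg) = - Hf x) by nra.
  apply Rle_trans with (Hf x / rg).
  2:{ unfold Rdiv. apply Rmult_le_compat_r. apply Rlt_le, Rinv_0_lt_compat; lra. lra. }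
  rewrite Rabs_left1.
  2:{ destruct (Rle_dec (P x) rg). lra. nra. }
  apply Rmult_le_reg_r with rg. lra. unfold Rdiv. rewrite Rmult_assoc, Rinv_l by lra. nra.
Qed.

Lemma exp_neg_sq_le x : exp (- x^2) <= / (1 + x^2).
Proof.
  assert (H : 1 + x^2 <= exp (x^2)).
  { destruct (Req_dec (x^2) 0) as [E|E]. rewrite E, exp_0. lra. left. apply exp_ineq1. exact E. }
  rewrite <- (Rinv_inv (exp (- x^2))). apply Rinv_le_contravar. nra.
  rewrite <- exp_Ropp. replace (- - x^2) with (x^2) by ring. exact H.
Qed.

Lemma P_lim_p : forall eps, 0 < eps -> exists N, forall x, N < x -> Rabs (P x - rg) < eps.
Proof.
  intros eps He. assert (H4 := rg_pos).
  exists (/ (eps * rg)). intros x Hx.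
  assert (Hp : 0 < / (eps * rg)) by (apply Rinv_0_lt_compat; nra).
  eapply Rle_lt_trans. apply P_close; lra.
  apply Rle_lt_trans with (/ (1 + x^2) / rg).
  unfold Rdiv; apply Rmult_le_compat_r. left; apply Rinv_0_lt_compat; lra. apply exp_neg_sq_le.
  apply Rmult_lt_reg_r with rg. lra. unfold Rdiv. rewrite Rmult_assoc, Rinv_l, Rmult_1_r by lra.
  apply Rmult_lt_reg_l with (1 + x^2). nra. rewrite Rinv_r by nra.
  assert (x * (eps * rg) > 1).
  { apply Rmult_lt_reg_r with (/ (eps*rg)). auto. rewrite Rmult_assoc, Rinv_r, Rmult_1_l, Rmult_1_r by nra. lra. }
  nra.
Qed.

Lemma P_lim_m : forall eps, 0 < eps -> exists N, forall x, x < N -> Rabs (P x + rg) < eps.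
Proof.
  intros eps He. destruct (P_lim_p eps He) as [N HN]. exists (- N). intros x Hx.
  replace (P x) with (- P (- x)) by (rewrite P_odd; ring).
  replace (- P (- x) + rg) with (- (P (-x) - rg)) by ring. rewrite Rabs_Ropp. apply HN. lra.
Qed.

Lemma Derive_P x : Derive P x = gauss x.
Proof. apply is_derive_unique, P_deriv. Qed.

Lemma G_eq s : G s = / sqrt PI * (P s + rg).
Proof.
  unfold G. f_equal.
  replace (P s + rg) with (P s - - rg) by ring.
  apply is_RInt_gen_unique.
  apply (is_RInt_gen_ext (Derive P)).
  { apply filter_forall. intros ab x _. rewrite Derive_P. reflexivity. }
  apply is_RInt_gen_Derive.
  - apply filter_forall. intros ab x _. exists (gauss x). apply P_deriv.
  - apply filter_forall. intros ab x _.
    apply (continuous_ext gauss). intros; rewrite Derive_P; reflexivity. apply gauss_cont.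
  - apply filterlim_locally. intros eps. destruct (P_lim_m eps (cond_pos eps)) as [N HN].
    exists N. intros x Hx. apply ballR. replace (P x - - rg) with (P x + rg) by ring. auto.
  - apply filterlim_locally. intros eps. unfold at_point. apply ball_center.
Qed.


Definition ph (t : R) : R := PI * (t - / 2).
Definition z (t : R) : R := tan (ph t).

Lemma cos_ph t : cos (ph t) = sin (PI * t).
Proof.
  unfold ph. replace (PI * (t - / 2)) with (PI * t - PI / 2) by field.
  rewrite cos_minus, cos_PI2, sin_PI2. ring.
Qed.

Lemma sin_pos t : 0 < t < 1 -> 0 < sin (PI * t).
Proof. intros. apply sin_gt_0; assert (HP := PI_RGT_0); nra. Qed.

Lemma cos_ph_pos t : 0 < t < 1 -> 0 < cos (ph t).
Proof. intros. rewrite cos_ph. apply sin_pos; auto. Qed.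

Lemma z_deriv t : 0 < t < 1 -> is_derive z t (PI * (1 + z t ^ 2)).
Proof.
  intros Ht. assert (Hc := cos_ph_pos t Ht). unfold z, tan, ph in *.
  auto_derive; replace (t + - / 2) with (t - / 2) by ring. lra.
  field. lra.
Qed.

Lemma one_z2 t : 0 < t < 1 -> 1 + z t ^ 2 = / (sin (PI * t))^2.
Proof.
  intros Ht. assert (Hc := cos_ph_pos t Ht). unfold z, tan.
  rewrite <- cos_ph. assert (H := sin2_cos2 (ph t)). unfold Rsqr in H.
  assert (E: 1 + (sin (ph t) / cos (ph t))^2 = (sin (ph t) * sin (ph t) + cos (ph t) * cos (ph t)) / (cos (ph t))^2) by (field; lra).
  rewrite E, H. field. lra.
Qed.

Lemma sin_le_left t : 0 < t < 1 -> sin (PI * t) <= PI * t.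
Proof. intros. left. apply sin_lt_x. assert (HPI := PI_RGT_0). nra. Qed.

Lemma sin_le_right t : 0 < t < 1 -> sin (PI * t) <= PI * (1 - t).
Proof.
  intros. replace (sin (PI * t)) with (sin (PI * (1 - t))).
  left. apply sin_lt_x. assert (HPI := PI_RGT_0). nra.
  rewrite <- sin_PI_x. f_equal. ring.
Qed.

Lemma z_neg t : 0 < t < / 2 -> z t < 0.
Proof.
  intros Ht. assert (Hc := cos_ph_pos t ltac:(lra)). unfold z, tan.
  assert (sin (ph t) < 0).
  { apply sin_lt_0_var; unfold ph; assert (HPI := PI_RGT_0); nra. }
  apply Rmult_lt_reg_r with (cos (ph t)); auto. unfold Rdiv.
  rewrite Rmult_assoc, Rinv_l; lra.
Qed.

Lemma z_pos t : / 2 < t < 1 -> 0 < z t.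
Proof.
  intros Ht. assert (Hc := cos_ph_pos t ltac:(lra)). unfold z, tan.
  assert (0 < sin (ph t)).
  { apply sin_gt_0; unfold ph; assert (HPI := PI_RGT_0); nra. }
  apply Rdiv_lt_0_compat; auto.
Qed.

Definition c0 : R := PI / sqrt PI.
Lemma c0_pos : 0 < c0.
Proof. unfold c0. apply Rdiv_lt_0_compat. apply PI_RGT_0. apply sqrt_lt_R0, PI_RGT_0. Qed.

Definition q1 (y : R) : R := - c0 * (1 + y^2).
Definition dq1 (y : R) : R := -2 * c0 * y.
Definition q2 (y : R) : R := 2 * c0 * PI * y^3 * (1 + y^2).
Definition dq2 (y : R) : R := 2 * c0 * PI * (3 * y^2 + 5 * y^4).
Definition q3 (y : R) : R := 2 * c0 * PI^2 * (1 + y^2) * (3 * y^2 + 3 * y^4 - 2 * y^6).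

Lemma q1_d y : is_derive q1 y (dq1 y).
Proof. unfold q1, dq1. auto_derive. easy. ring. Qed.
Lemma q2_d y : is_derive q2 y (dq2 y).
Proof. unfold q2, dq2. auto_derive. easy. ring. Qed.
Lemma q12 y : PI * (1 + y^2) * (dq1 y - 2 * y * q1 y) = q2 y.
Proof. unfold q1, dq1, q2. ring. Qed.
Lemma q23 y : PI * (1 + y^2) * (dq2 y - 2 * y * q2 y) = q3 y.
Proof. unfold q3, dq2, q2. ring. Qed.

Lemma absy_le y : Rabs y <= 1 + y^2.
Proof. unfold Rabs; destruct (Rcase_abs y); nra. Qed.

Lemma q1_bd y : Rabs (q1 y) <= c0 * (1 + y^2)^4.
Proof.
  assert (H := c0_pos). unfold q1. rewrite Rabs_left1 by nra.
  assert (1 + y^2 <= (1+y^2)^4).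
  { assert (1 <= 1 + y^2) by nra. set (s := 1 + y^2) in *.
    assert (1 <= s^3) by (apply pow_R1_Rle; lra).
    replace (s^4) with (s * s^3) by ring. nra. }
  nra.
Qed.

Lemma q2_bd y : Rabs (q2 y) <= 2 * c0 * PI * (1 + y^2)^4.
Proof.
  assert (H := c0_pos). assert (HP := PI_RGT_0). unfold q2.
  rewrite !Rabs_mult. rewrite (Rabs_right (1 + y^2)) by nra.
  rewrite (Rabs_right 2) by lra. rewrite (Rabs_right c0) by lra. rewrite (Rabs_right PI) by lra.
  assert (A := absy_le y). assert (B : Rabs (y^3) = Rabs y ^ 3) by (rewrite RPow_abs; auto).
  rewrite B. set (s := 1 + y^2) in *. set (a := Rabs y) in *.
  assert (0 <= a) by apply Rabs_pos. assert (1 <= s) by (unfold s; nra).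
  assert (a^3 <= s^3). { apply pow_incr; lra. }
  assert (a^3 * s <= s^4). { replace (s^4) with (s^3 * s) by ring. apply Rmult_le_compat_r; lra. }
  assert (0 <= 2 * c0 * PI) by nra.
  replace (2 * c0 * PI * a ^ 3 * s) with ((2 * c0 * PI) * (a^3 * s)) by ring.
  apply Rmult_le_compat_l; lra.
Qed.

Lemma q3_bd y : Rabs (q3 y) <= 16 * c0 * PI^2 * (1 + y^2)^4.
Proof.
  assert (H := c0_pos). assert (HP := PI_RGT_0). unfold q3.
  set (s := 1 + y^2).
  assert (1 <= s) by (unfold s; nra).
  assert (E: 3 * y^2 + 3 * y^4 - 2 * y^6 = 3 * (s - 1) + 3 * (s-1)^2 - 2 * (s-1)^3) by (unfold s; ring).
  rewrite E. set (v := s - 1). assert (0 <= v) by (unfold v; lra).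
  assert (B : Rabs (3 * v + 3 * v^2 - 2 * v^3) <= 8 * s^3).
  { apply Rabs_le. unfold v in *. split; nra. }
  rewrite !Rabs_mult. rewrite (Rabs_right s) by lra.
  rewrite (Rabs_right 2) by lra. rewrite (Rabs_right c0) by lra. rewrite (Rabs_right (PI^2)) by nra.
  assert (0 <= 2 * c0 * PI^2) by nra.
  set (X := Rabs (3 * v + 3 * v ^ 2 - 2 * v ^ 3)) in *.
  replace (16 * c0 * PI ^ 2 * s ^ 4) with ((2 * c0 * PI^2) * (s * (8 * s^3))) by ring.
  replace (2 * c0 * PI ^ 2 * s * X) with ((2 * c0 * PI^2) * (s * X)) by ring.
  apply Rmult_le_compat_l; auto. apply Rmult_le_compat_l; lra.
Qed.

Lemma decay s : 1 <= s -> exp (- s) * s^4 <= 3125 / s.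
Proof.
  intros Hs.
  assert (E : exp s = exp (s/5) ^ 5).
  { simpl. rewrite Rmult_1_r. rewrite <- !exp_plus. f_equal. field. }
  assert (H1 : s / 5 < exp (s/5)).
  { assert (H := exp_ineq1 (s/5) ltac:(lra)). lra. }
  assert (H2 : (s/5)^5 <= exp (s/5)^5). { apply pow_incr. lra. }
  assert (H3 : s^5 / 3125 <= exp s). { rewrite E. replace (s^5/3125) with ((s/5)^5) by field. auto. }
  rewrite exp_Ropp.
  assert (0 < exp s) by apply exp_pos.
  apply Rmult_le_reg_l with (exp s). auto.
  replace (exp s * (/ exp s * s ^ 4)) with (s^4) by (field; lra).
  apply Rmult_le_reg_r with (s / 3125). lra.
  replace (exp s * (3125 / s) * (s / 3125)) with (exp s) by (field; lra).
  replace (s ^ 4 * (s / 3125)) with (s^5/3125) by (field; lra). auto.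
Qed.

Lemma Hq_bound (q : R -> R) (C : R) (t : R) : 0 <= C -> (forall y, Rabs (q y) <= C * (1 + y^2)^4) ->
  0 < t < 1 -> Rabs (exp (- (z t)^2) * q (z t)) <= C * exp 1 * 3125 * (sin (PI * t))^2.
Proof.
  intros HC Hq Ht.
  assert (Hs := one_z2 t Ht). assert (Hsin := sin_pos t Ht).
  set (y := z t) in *. set (s := 1 + y^2) in *.
  assert (E1 : exp (- y^2) = exp 1 * exp (- s)).
  { rewrite <- exp_plus. f_equal. unfold s. ring. }
  assert (Hs1 : 1 <= s) by (unfold s; nra).
  assert (D := decay s Hs1).
  rewrite Rabs_mult, Rabs_right by (left; apply exp_pos).
  rewrite E1.
  apply Rle_trans with (exp 1 * exp (- s) * (C * s^4)).
  { apply Rmult_le_compat_l. assert (0 < exp 1 * exp (-s)) by (apply Rmult_lt_0_compat; apply exp_pos). lra.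
    apply Hq. }
  assert (E2 : sin (PI * t) ^ 2 = / s) by (rewrite Hs; field; lra).
  rewrite E2.
  replace (exp 1 * exp (- s) * (C * s ^ 4)) with ((C * exp 1) * (exp (-s) * s^4)) by ring.
  replace (C * exp 1 * 3125 * / s) with ((C * exp 1) * (3125 / s)) by (field; lra).
  apply Rmult_le_compat_l. assert (0 < exp 1) by apply exp_pos. nra. auto.
Qed.

Definition thd (q : R -> R) (t : R) : R :=
  if Rlt_dec 0 t then if Rlt_dec t 1 then exp (- (z t)^2) * q (z t) else 0 else 0.

Lemma thd_in q t : 0 < t < 1 -> thd q t = exp (- (z t)^2) * q (z t).
Proof.
  intros [H1 H2]. unfold thd. destruct (Rlt_dec 0 t); [|lra]. destruct (Rlt_dec t 1); [|lra]. auto.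
Qed.

Lemma thd_out q t : t <= 0 \/ 1 <= t -> thd q t = 0.
Proof.
  intros H. unfold thd. destruct (Rlt_dec 0 t); auto. destruct (Rlt_dec t 1); auto. lra.
Qed.

Lemma loc_int a b t : a < t < b -> locally t (fun s => a < s < b).
Proof.
  intros Ht. assert (Hp : 0 < Rmin (t - a) (b - t)) by (apply Rmin_glb_lt; lra).
  exists (mkposreal _ Hp). intros s Hs. apply ballR in Hs. simpl in Hs.
  assert (Rmin (t-a) (b-t) <= t - a) by apply Rmin_l.
  assert (Rmin (t-a) (b-t) <= b - t) by apply Rmin_r.
  change (Rabs (s - t) < Rmin (t-a) (b-t)) in Hs. unfold Rabs in Hs. destruct (Rcase_abs (s - t)); lra.
Qed.

Lemma is_derive_eq (f : R -> R) (x l l' : R) : is_derive f x l -> l = l' -> is_derive f x l'.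
Proof. intros H E; subst; auto. Qed.

Lemma thd_deriv_in (q dq : R -> R) t :
  (forall y, is_derive q y (dq y)) -> 0 < t < 1 ->
  is_derive (thd q) t (thd (fun y => PI * (1 + y^2) * (dq y - 2 * y * q y)) t).
Proof.
  intros Hq Ht. rewrite (thd_in _ t) by auto.
  apply is_derive_ext_loc with (f := fun s => exp (- (z s)^2) * q (z s)).
  { generalize (loc_int 0 1 t Ht). apply filter_imp. intros s Hs. rewrite thd_in; auto. }
  eapply is_derive_eq.
  apply (is_derive_comp (fun y => exp (- y^2) * q y) z).
  2: apply z_deriv; auto.
  apply (@is_derive_mult R_AbsRing).
  + apply (is_derive_comp exp (fun y => - y^2)). apply is_derive_Reals, derivable_pt_lim_exp.
    auto_derive. easy. reflexivity.
  + apply Hq.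
  + intros. apply Rmult_comm.
  + unfold scal, plus; simpl; unfold mult; simpl. ring.
Qed.

Lemma thd_bd (q : R -> R) (C : R) : 0 <= C -> (forall y, Rabs (q y) <= C * (1 + y^2)^4) ->
  forall t, Rabs (thd q t) <= C * exp 1 * 3125 * PI^2 * t^2 /\
            Rabs (thd q t) <= C * exp 1 * 3125 * PI^2 * (1 - t)^2.
Proof.
  intros HC Hq t.
  assert (HK : 0 <= C * exp 1 * 3125 * PI^2).
  { assert (0 < exp 1) by apply exp_pos. assert (0 < PI^2) by (apply pow_lt, PI_RGT_0).
    apply Rmult_le_pos; [|lra]. apply Rmult_le_pos; [|lra]. apply Rmult_le_pos; lra. }
  destruct (Rlt_dec 0 t) as [H0|H0]; [destruct (Rlt_dec t 1) as [H1|H1]|].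
  - rewrite thd_in by lra. assert (B := Hq_bound q C t HC Hq ltac:(lra)).
    assert (Hs := sin_pos t ltac:(lra)).
    assert (L := sin_le_left t ltac:(lra)). assert (Rr := sin_le_right t ltac:(lra)).
    assert (0 < exp 1) by apply exp_pos.
    assert (0 <= C * exp 1 * 3125) by nra.
    split; eapply Rle_trans; try apply B.
    + replace (C * exp 1 * 3125 * PI ^ 2 * t ^ 2) with ((C * exp 1 * 3125) * (PI * t)^2) by ring.
      apply Rmult_le_compat_l; auto. apply pow_incr; lra.
    + replace (C * exp 1 * 3125 * PI ^ 2 * (1 - t) ^ 2) with ((C * exp 1 * 3125) * (PI * (1 - t))^2) by ring.
      apply Rmult_le_compat_l; auto. apply pow_incr; lra.
  - rewrite thd_out by lra. rewrite Rabs_R0. split; apply Rmult_le_pos; auto; apply pow2_ge_0.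
  - rewrite thd_out by lra. rewrite Rabs_R0. split; apply Rmult_le_pos; auto; apply pow2_ge_0.
Qed.

Lemma deriv_flat (F : R -> R) (a K d : R) : 0 < d -> 0 <= K ->
  (forall h, Rabs h < d -> Rabs (F (a + h) - F a) <= K * h^2) -> is_derive F a 0.
Proof.
  intros Hd HK H. apply is_derive_Reals. intros eps Heps.
  assert (Hp : 0 < Rmin d (eps / (K + 1))).
  { apply Rmin_glb_lt; auto. apply Rdiv_lt_0_compat; lra. }
  exists (mkposreal _ Hp). intros h Hh0 Hh. simpl in Hh.
  assert (Hh1 : Rabs h < d) by (eapply Rlt_le_trans; [apply Hh| apply Rmin_l]).
  assert (Hh2 : Rabs h < eps / (K + 1)) by (eapply Rlt_le_trans; [apply Hh| apply Rmin_r]).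
  assert (B := H h Hh1).
  assert (Ha : 0 < Rabs h) by (apply Rabs_pos_lt; auto).
  rewrite Rminus_0_r. unfold Rdiv. rewrite Rabs_mult, Rabs_inv.
  apply Rmult_lt_reg_r with (Rabs h). auto. rewrite Rmult_assoc, Rinv_l by lra. rewrite Rmult_1_r.
  apply Rle_lt_trans with (K * h^2). auto.
  replace (h^2) with (Rabs h * Rabs h) by (rewrite <- Rabs_mult; rewrite Rabs_right by nra; ring).
  assert (Rabs h * (K + 1) < eps).
  { apply Rmult_lt_reg_r with (/ (K+1)). apply Rinv_0_lt_compat; lra.
    rewrite Rmult_assoc, Rinv_r, Rmult_1_r by lra. auto. }
  nra.
Qed.

Lemma thd_ext q q' t : (forall y, q y = q' y) -> thd q t = thd q' t.
Proof. intros H. unfold thd. rewrite H. auto. Qed.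

Lemma is_derive_loc0 (F : R -> R) t a b : a < t < b -> (forall s, a < s < b -> F s = 0) -> is_derive F t 0.
Proof.
  intros Ht H. apply is_derive_ext_loc with (f := fun _ => 0).
  generalize (loc_int a b t Ht). apply filter_imp. intros s Hs. rewrite H; auto.
  apply (@is_derive_const R_AbsRing R_NormedModule).
Qed.

Lemma thd_deriv_all (q dq q' : R -> R) (C : R) :
  (forall y, is_derive q y (dq y)) -> (forall y, PI * (1 + y^2) * (dq y - 2 * y * q y) = q' y) ->
  0 <= C -> (forall y, Rabs (q y) <= C * (1 + y^2)^4) ->
  forall t, is_derive (thd q) t (thd q' t).
Proof.
  intros Hd Hr HC Hb t.
  assert (B := thd_bd q C HC Hb).
  assert (HK : 0 <= C * exp 1 * 3125 * PI^2).
  { assert (0 < exp 1) by apply exp_pos. assert (0 < PI^2) by (apply pow_lt, PI_RGT_0).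
    apply Rmult_le_pos; [|lra]. apply Rmult_le_pos; [|lra]. apply Rmult_le_pos; lra. }
  destruct (Rtotal_order t 0) as [H0|[H0|H0]].
  { rewrite thd_out by lra. apply (is_derive_loc0 _ t (t-1) 0). lra. intros; apply thd_out; lra. }
  { subst. rewrite thd_out by lra. apply (deriv_flat _ 0 (C * exp 1 * 3125 * PI^2) 1). lra. apply HK.
    intros h _. rewrite (thd_out q 0) by lra. rewrite Rplus_0_l, Rminus_0_r. apply B. }
  destruct (Rtotal_order t 1) as [H1|[H1|H1]].
  { erewrite thd_ext. apply thd_deriv_in. auto. lra. auto. }
  { subst. rewrite thd_out by lra. apply (deriv_flat _ 1 (C * exp 1 * 3125 * PI^2) 1). lra. apply HK.
    intros h _. rewrite (thd_out q 1) by lra. rewrite Rminus_0_r.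
    replace (h^2) with ((1 - (1 + h))^2) by ring. apply B. }
  { rewrite thd_out by lra. apply (is_derive_loc0 _ t 1 (t+1)). lra. intros; apply thd_out; lra. }
Qed.

Definition Cq : R := 16 * c0 * PI^2.
Definition Kth : R := Cq * exp 1 * 3125 * PI^2.

Lemma Cq_pos : 0 < Cq.
Proof. unfold Cq. assert (H := c0_pos). assert (0 < PI^2) by (apply pow_lt, PI_RGT_0).
  apply Rmult_lt_0_compat; [|lra]. lra. Qed.

Lemma pow4_ge0 y : 0 <= (1 + y^2)^4.
Proof. apply pow_le. nra. Qed.

Lemma q1_bd' y : Rabs (q1 y) <= Cq * (1 + y^2)^4.
Proof.
  eapply Rle_trans. apply q1_bd. apply Rmult_le_compat_r. apply pow4_ge0.
  unfold Cq. assert (H := c0_pos). assert (3 < PI) by (assert (HH := PI2_3_2); lra). assert (PI^2 > 1) by (simpl; nra). nra.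
Qed.
Lemma q2_bd' y : Rabs (q2 y) <= Cq * (1 + y^2)^4.
Proof.
  eapply Rle_trans. apply q2_bd. apply Rmult_le_compat_r. apply pow4_ge0.
  unfold Cq. assert (H := c0_pos). assert (3 < PI) by (assert (HH := PI2_3_2); lra). assert (16*PI^2 - 2*PI > 0) by (simpl; nra). assert (0 < c0 * (16*PI^2 - 2*PI)) by (apply Rmult_lt_0_compat; lra). nra.
Qed.
Lemma q3_bd' y : Rabs (q3 y) <= Cq * (1 + y^2)^4.
Proof. unfold Cq. apply q3_bd. Qed.

Definition th1 := thd q1.
Definition th2 := thd q2.
Definition th3 := thd q3.

Lemma th1_d t : is_derive th1 t (th2 t).
Proof. apply (thd_deriv_all q1 dq1 q2 Cq q1_d q12). left; apply Cq_pos. apply q1_bd'. Qed.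
Lemma th2_d t : is_derive th2 t (th3 t).
Proof. apply (thd_deriv_all q2 dq2 q3 Cq q2_d q23). left; apply Cq_pos. apply q2_bd'. Qed.

Lemma q3_ex y : ex_derive q3 y.
Proof. unfold q3. auto_derive. easy. Qed.

Lemma th3_cont t : continuous th3 t.
Proof.
  apply (@ex_derive_continuous R_AbsRing R_NormedModule).
  exists (thd (fun y => PI * (1 + y^2) * (Derive q3 y - 2 * y * q3 y)) t).
  apply (thd_deriv_all q3 (Derive q3) _ Cq).
  intros y. apply Derive_correct, q3_ex. auto. left; apply Cq_pos. apply q3_bd'.
Qed.

Lemma Kth_pos : 0 < Kth.
Proof. unfold Kth. assert (H := Cq_pos). assert (0 < exp 1) by apply exp_pos.
  assert (0 < PI^2) by (apply pow_lt, PI_RGT_0).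
  apply Rmult_lt_0_compat; [|lra]. apply Rmult_lt_0_compat; [|lra]. apply Rmult_lt_0_compat; lra. Qed.

Lemma th_bd q : (forall y, Rabs (q y) <= Cq * (1 + y^2)^4) -> forall t,
  Rabs (thd q t) <= Kth * t^2 /\ Rabs (thd q t) <= Kth * (1 - t)^2 /\ Rabs (thd q t) <= Kth.
Proof.
  intros H t. assert (B := thd_bd q Cq (Rlt_le _ _ Cq_pos) H t). fold Kth in B.
  assert (HK := Kth_pos).
  split. apply B. split. apply B.
  destruct (Rlt_dec 0 t) as [H0|H0]; [destruct (Rlt_dec t 1) as [H1|H1]|].
  - destruct B as [B _]. eapply Rle_trans. apply B.
    assert (t^2 <= 1) by nra. nra.
  - rewrite thd_out by lra. rewrite Rabs_R0. lra.
  - rewrite thd_out by lra. rewrite Rabs_R0. lra.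
Qed.

Lemma cont_of_deriv (F : R -> R) x l : is_derive F x l -> continuity_pt F x.
Proof.
  intros H. apply continuity_pt_filterlim. apply (@ex_derive_continuous R_AbsRing R_NormedModule).
  exists l; auto.
Qed.

Lemma mvt_left (F F' : R -> R) (K L t : R) :
  (forall x, 0 < x < 1 -> is_derive F x (F' x)) ->
  (forall x, 0 < x < 1 -> Rabs (F' x) <= K * x^2) -> 0 < t < 1 ->
  (forall eps, 0 < eps -> exists s, 0 < s < t /\ Rabs (F s - L) < eps) ->
  Rabs (F t - L) <= K * t^3.
Proof.
  intros Hd Hb Ht Hl. apply le_epsilon. intros eps He.
  destruct (Hl eps He) as [s [Hs Hs2]].
  destruct (MVT_gen F s t F') as [c [Hc Ec]].
  { intros x Hx. rewrite Rmin_left in Hx by lra. rewrite Rmax_right in Hx by lra. apply Hd. lra. }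
  { intros x Hx. rewrite Rmin_left in Hx by lra. rewrite Rmax_right in Hx by lra.
    apply (cont_of_deriv _ _ (F' x)), Hd. lra. }
  rewrite Rmin_left in Hc by lra. rewrite Rmax_right in Hc by lra.
  assert (B := Hb c ltac:(lra)).
  assert (0 <= K * c^2) by (eapply Rle_trans; [apply Rabs_pos|apply B]).
  assert (0 < c^2) by (apply pow_lt; lra).
  assert (0 <= K) by nra.
  assert (K * c^2 <= K * t^2) by (apply Rmult_le_compat_l; auto; apply pow_incr; lra).
  assert (Rabs (F t - F s) <= K * t^2 * t).
  { rewrite Ec, Rabs_mult, (Rabs_right (t - s)) by lra. 
    apply Rle_trans with (K * t^2 * (t - s)). apply Rmult_le_compat_r; lra.
    apply Rmult_le_compat_l; nra. }
  replace (F t - L) with ((F t - F s) + (F s - L)) by ring.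
  eapply Rle_trans. apply Rabs_triang. replace (K * t^3) with (K * t^2 * t) by ring. lra.
Qed.

Lemma mvt_right (F F' : R -> R) (K L t : R) :
  (forall x, 0 < x < 1 -> is_derive F x (F' x)) ->
  (forall x, 0 < x < 1 -> Rabs (F' x) <= K * (1 - x)^2) -> 0 < t < 1 ->
  (forall eps, 0 < eps -> exists s, t < s < 1 /\ Rabs (F s - L) < eps) ->
  Rabs (F t - L) <= K * (1 - t)^3.
Proof.
  intros Hd Hb Ht Hl. apply le_epsilon. intros eps He.
  destruct (Hl eps He) as [s [Hs Hs2]].
  destruct (MVT_gen F t s F') as [c [Hc Ec]].
  { intros x Hx. rewrite Rmin_left in Hx by lra. rewrite Rmax_right in Hx by lra. apply Hd. lra. }
  { intros x Hx. rewrite Rmin_left in Hx by lra. rewrite Rmax_right in Hx by lra.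
    apply (cont_of_deriv _ _ (F' x)), Hd. lra. }
  rewrite Rmin_left in Hc by lra. rewrite Rmax_right in Hc by lra.
  assert (B := Hb c ltac:(lra)).
  assert (0 <= K * (1-c)^2) by (eapply Rle_trans; [apply Rabs_pos|apply B]).
  assert (0 < (1-c)^2) by (apply pow_lt; lra).
  assert (0 <= K) by nra.
  assert (K * (1-c)^2 <= K * (1-t)^2) by (apply Rmult_le_compat_l; auto; apply pow_incr; lra).
  assert (Rabs (F s - F t) <= K * (1-t)^2 * (1-t)).
  { rewrite Ec, Rabs_mult, (Rabs_right (s - t)) by lra. 
    apply Rle_trans with (K * (1-t)^2 * (s - t)). apply Rmult_le_compat_r; lra.
    apply Rmult_le_compat_l; nra. }
  replace (F t - L) with (- (F s - F t) + (F s - L)) by ring.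
  eapply Rle_trans. apply Rabs_triang. rewrite Rabs_Ropp. replace (K * (1-t)^3) with (K * (1-t)^2 * (1-t)) by ring. lra.
Qed.

Lemma sqrtPI_pos : 0 < sqrt PI.
Proof. apply sqrt_lt_R0, PI_RGT_0. Qed.

Lemma theta_in t : 0 < t < 1 -> theta t = 1 - / sqrt PI * (P (z t) + rg).
Proof.
  intros Ht. unfold theta. destruct (Rle_dec t 0); [lra|]. destruct (Rle_dec 1 t); [lra|].
  rewrite G_eq. reflexivity.
Qed.

Lemma theta_le0 t : t <= 0 -> theta t = 1.
Proof. intros. unfold theta. destruct (Rle_dec t 0); [auto|lra]. Qed.

Lemma theta_ge1 t : 1 <= t -> theta t = 0.
Proof. intros. unfold theta. destruct (Rle_dec t 0); [lra|]. destruct (Rle_dec 1 t); [auto|lra]. Qed.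

Lemma theta_deriv_in t : 0 < t < 1 -> is_derive theta t (th1 t).
Proof.
  intros Ht.
  apply is_derive_ext_loc with (f := fun s => 1 - / sqrt PI * (P (z s) + rg)).
  { generalize (loc_int 0 1 t Ht). apply filter_imp. intros s Hs. rewrite theta_in; auto. }
  assert (Hs := sqrtPI_pos). assert (Hc := cos_ph_pos t Ht).
  unfold z, tan, ph in *.
  auto_derive; replace (t + - / 2) with (t - / 2) by ring.
  { split. eexists. apply P_deriv. split. lra. auto. }
  change (fun x : R => P x) with P. rewrite Derive_P.
  unfold th1, q1. rewrite thd_in by auto. unfold z, ph, tan. 
  unfold gauss, c0, Rdiv. field. lra.
Qed.

Lemma z_small N : exists d, 0 < d /\ forall s, 0 < s < d -> s < / 2 /\ z s < N.
Proof.
  assert (HP := PI_RGT_0).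
  set (m := Rabs N + 1). assert (Hm : 1 <= m) by (unfold m; assert (H := Rabs_pos N); lra).
  exists (Rmin (/2) (/ (PI * m))). split.
  { apply Rmin_glb_lt. lra. apply Rinv_0_lt_compat. nra. }
  intros s Hs.
  assert (Hs1 : s < / 2) by (eapply Rlt_le_trans; [apply Hs | apply Rmin_l]).
  assert (Hs2 : s < / (PI * m)) by (eapply Rlt_le_trans; [apply Hs | apply Rmin_r]).
  split; auto.
  assert (Hz := z_neg s ltac:(lra)).
  assert (E := one_z2 s ltac:(lra)). assert (Sp := sin_pos s ltac:(lra)).
  assert (Sl := sin_le_left s ltac:(lra)).
  assert (A : PI * s * m < 1).
  { apply Rmult_lt_reg_r with (/ (PI * m)). apply Rinv_0_lt_compat; nra.
    rewrite Rmult_1_l. replace (PI * s * m * / (PI * m)) with s by (field; lra). auto. }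
  assert (B : sin (PI * s) * m < 1) by nra.
  assert (C : m^2 < 1 + z s ^ 2).
  { rewrite E. apply Rmult_lt_reg_r with (sin (PI * s) ^ 2). apply pow_lt; auto.
    rewrite Rinv_l by (apply pow_nonzero; lra). 
    assert (0 < sin (PI * s) * m) by nra.
    replace (m^2 * sin (PI * s) ^2) with ((sin (PI * s) * m)^2) by ring. 
    assert (0 <= sin (PI * s) * m) by lra. nra. }
  destruct (Rle_dec 0 N). lra.
  assert (Rabs N = - N) by (apply Rabs_left; lra).
  destruct (Rlt_dec (z s) N); auto.
  assert (N <= z s) by lra. unfold m in C. nra.
Qed.

Lemma z_large N : exists d, 0 < d /\ forall s, 1 - d < s < 1 -> / 2 < s /\ N < z s.
Proof.
  assert (HP := PI_RGT_0).
  set (m := Rabs N + 1). assert (Hm : 1 <= m) by (unfold m; assert (H := Rabs_pos N); lra).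
  exists (Rmin (/2) (/ (PI * m))). split.
  { apply Rmin_glb_lt. lra. apply Rinv_0_lt_compat. nra. }
  intros s Hs.
  assert (Hs1 : 1 - s < / 2) by (assert (Rmin (/2) (/ (PI * m)) <= /2) by apply Rmin_l; lra).
  assert (Hs2 : 1 - s < / (PI * m)) by (assert (Rmin (/2) (/ (PI * m)) <= / (PI * m)) by apply Rmin_r; lra).
  split. lra.
  assert (Hz := z_pos s ltac:(lra)).
  assert (E := one_z2 s ltac:(lra)). assert (Sp := sin_pos s ltac:(lra)).
  assert (Sl := sin_le_right s ltac:(lra)).
  assert (A : PI * (1 - s) * m < 1).
  { apply Rmult_lt_reg_r with (/ (PI * m)). apply Rinv_0_lt_compat; nra.
    rewrite Rmult_1_l. replace (PI * (1 - s) * m * / (PI * m)) with (1 - s) by (field; lra). auto. }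
  assert (B : sin (PI * s) * m < 1) by nra.
  assert (C : m^2 < 1 + z s ^ 2).
  { rewrite E. apply Rmult_lt_reg_r with (sin (PI * s) ^ 2). apply pow_lt; auto.
    rewrite Rinv_l by (apply pow_nonzero; lra). 
    assert (0 < sin (PI * s) * m) by nra.
    replace (m^2 * sin (PI * s) ^2) with ((sin (PI * s) * m)^2) by ring. 
    assert (0 <= sin (PI * s) * m) by lra. nra. }
  destruct (Rle_dec N 0). lra.
  assert (Rabs N = N) by (apply Rabs_right; lra).
  destruct (Rlt_dec N (z s)); auto.
  assert (z s <= N) by lra. unfold m in C. nra.
Qed.

Lemma th1_bd t : Rabs (th1 t) <= Kth * t^2 /\ Rabs (th1 t) <= Kth * (1 - t)^2 /\ Rabs (th1 t) <= Kth.
Proof. apply th_bd, q1_bd'. Qed.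
Lemma th2_bd t : Rabs (th2 t) <= Kth.
Proof. apply th_bd, q2_bd'. Qed.
Lemma th3_bd t : Rabs (th3 t) <= Kth.
Proof. apply th_bd, q3_bd'. Qed.

Lemma theta_near0 t : 0 < t < 1 -> Rabs (theta t - 1) <= Kth * t^3.
Proof.
  intros Ht. apply (mvt_left theta th1).
  - intros; apply theta_deriv_in; auto.
  - intros. apply th1_bd.
  - auto.
  - intros eps He. assert (Hs := sqrtPI_pos).
    destruct (P_lim_m (eps * sqrt PI)) as [N HN]. nra.
    destruct (z_small N) as [d [Hd Hz]].
    set (s := Rmin d t / 2).
    assert (0 < Rmin d t) by (apply Rmin_glb_lt; lra).
    assert (Rmin d t <= d) by apply Rmin_l. assert (Rmin d t <= t) by apply Rmin_r.
    exists s. split. unfold s; lra.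
    destruct (Hz s ltac:(unfold s; lra)) as [_ Hzs].
    rewrite theta_in by (unfold s; lra).
    replace (1 - / sqrt PI * (P (z s) + rg) - 1) with (- (/ sqrt PI * (P (z s) + rg))) by ring.
    rewrite Rabs_Ropp, Rabs_mult, Rabs_inv, Rabs_right by lra.
    apply Rmult_lt_reg_l with (sqrt PI). auto. rewrite <- Rmult_assoc, Rinv_r, Rmult_1_l by lra.
    specialize (HN _ Hzs). lra.
Qed.

Lemma theta_near1 t : 0 < t < 1 -> Rabs (theta t) <= Kth * (1 - t)^3.
Proof.
  intros Ht. replace (theta t) with (theta t - 0) by ring. apply (mvt_right theta th1).
  - intros; apply theta_deriv_in; auto.
  - intros. apply th1_bd.
  - auto.
  - intros eps He. assert (Hs := sqrtPI_pos).
    destruct (P_lim_p (eps * sqrt PI)) as [N HN]. nra.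
    destruct (z_large N) as [d [Hd Hz]].
    set (s := 1 - Rmin d (1 - t) / 2).
    assert (0 < Rmin d (1 - t)) by (apply Rmin_glb_lt; lra).
    assert (Rmin d (1-t) <= d) by apply Rmin_l. assert (Rmin d (1-t) <= 1-t) by apply Rmin_r.
    exists s. split. unfold s; lra.
    destruct (Hz s ltac:(unfold s; lra)) as [_ Hzs].
    rewrite theta_in by (unfold s; lra).
    assert (E : 1 - / sqrt PI * (P (z s) + rg) - 0 = - (/ sqrt PI * (P (z s) - rg))).
    { unfold rg. field. lra. }
    rewrite E.
    rewrite Rabs_Ropp, Rabs_mult, Rabs_inv, Rabs_right by lra.
    apply Rmult_lt_reg_l with (sqrt PI). auto. rewrite <- Rmult_assoc, Rinv_r, Rmult_1_l by lra.
    specialize (HN _ Hzs). lra.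
Qed.

Lemma theta_d t : is_derive theta t (th1 t).
Proof.
  assert (HK := Kth_pos).
  destruct (Rtotal_order t 0) as [H0|[H0|H0]].
  { unfold th1. rewrite thd_out by lra.
    apply is_derive_ext_loc with (f := fun _ => 1).
    generalize (loc_int (t-1) 0 t ltac:(lra)). apply filter_imp. intros s Hs. rewrite theta_le0; auto; lra.
    apply (@is_derive_const R_AbsRing R_NormedModule). }
  { subst. unfold th1. rewrite thd_out by lra. apply (deriv_flat _ 0 Kth 1). lra. lra.
    intros h Hh. rewrite Rplus_0_l. rewrite (theta_le0 0) by lra.
    destruct (Rle_dec h 0). rewrite theta_le0 by auto. rewrite Rminus_diag, Rabs_R0. nra.
    assert (Rabs h = h) by (apply Rabs_right; lra).
    eapply Rle_trans. apply theta_near0; lra. 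
    assert (h^3 <= h^2) by (simpl; nra). nra. }
  destruct (Rtotal_order t 1) as [H1|[H1|H1]].
  { apply theta_deriv_in; lra. }
  { subst. unfold th1. rewrite thd_out by lra. apply (deriv_flat _ 1 Kth 1). lra. lra.
    intros h Hh. rewrite (theta_ge1 1) by lra. rewrite Rminus_0_r.
    destruct (Rle_dec 0 h). rewrite theta_ge1 by lra. rewrite Rabs_R0. nra.
    assert (Rabs h = - h) by (apply Rabs_left; lra).
    eapply Rle_trans. apply theta_near1; lra.
    replace (1 - (1 + h)) with (- h) by ring.
    assert ((-h)^3 <= h^2) by (simpl; nra). nra. }
  { unfold th1. rewrite thd_out by lra.
    apply is_derive_ext_loc with (f := fun _ => 0).
    generalize (loc_int 1 (t+1) t ltac:(lra)). apply filter_imp. intros s Hs. rewrite theta_ge1; auto; lra.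
    apply (@is_derive_const R_AbsRing R_NormedModule). }
Qed.

Lemma theta_bd t : Rabs (theta t) <= 1 + Kth.
Proof.
  assert (HK := Kth_pos).
  destruct (Rle_dec t 0). rewrite theta_le0, Rabs_R1 by auto; lra.
  destruct (Rle_dec 1 t). rewrite theta_ge1, Rabs_R0 by auto; lra.
  assert (B := theta_near0 t ltac:(lra)).
  assert (t^3 <= 1) by (simpl; nra).
  assert (Rabs (theta t - 1) <= Kth) by nra.
  replace (theta t) with ((theta t - 1) + 1) by ring.
  eapply Rle_trans. apply Rabs_triang. rewrite Rabs_R1. lra.
Qed.


Definition al w t := theta ((t - w) / w).
Definition al1 w t := th1 ((t - w) / w) / w.
Definition al2 w t := th2 ((t - w) / w) / w^2.
Definition al3 w t := th3 ((t - w) / w) / w^3.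
Definition be w t := 1 - theta (t / w).
Definition be1 w t := - th1 (t / w) / w.
Definition be2 w t := - th2 (t / w) / w^2.
Definition be3 w t := - th3 (t / w) / w^3.

Lemma comp_gen (G F F' : R -> R) (w c a sh t : R) : 0 < w ->
  (forall s, is_derive F s (F' s)) -> (forall t, G t = a * F ((t - c) / w) + sh) ->
  is_derive G t (a * F' ((t - c)/w) / w).
Proof.
  intros Hw HF HG. apply (is_derive_ext (fun t => a * F ((t - c) / w) + sh)).
  intros; rewrite HG; auto.
  auto_derive. exists (F' ((t-c)/w)). apply HF.
  change (fun x : R => F x) with F. replace ((t + - c) * / w) with ((t - c) / w) by (unfold Rdiv; ring).
  rewrite (is_derive_unique _ _ _ (HF _)). field. lra.
Qed.

Ltac cg G F F' w c a sh H HF := eapply is_derive_eq; [apply (comp_gen G F F' w c a sh _ H HF); intros|].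

Lemma al_d w t : 0 < w -> is_derive (al w) t (al1 w t).
Proof. intros Hw. cg (al w) theta th1 w w 1 0 Hw theta_d. unfold al; ring. unfold al1; field; lra. Qed.
Lemma al1_d w t : 0 < w -> is_derive (al1 w) t (al2 w t).
Proof. intros Hw. cg (al1 w) th1 th2 w w (/w) 0 Hw th1_d. unfold al1; field; lra. unfold al2; field; lra. Qed.
Lemma al2_d w t : 0 < w -> is_derive (al2 w) t (al3 w t).
Proof. intros Hw. cg (al2 w) th2 th3 w w (/w^2) 0 Hw th2_d. unfold al2; field; lra. unfold al3; field; lra. Qed.
Lemma be_d w t : 0 < w -> is_derive (be w) t (be1 w t).
Proof. intros Hw. cg (be w) theta th1 w 0 (-1) 1 Hw theta_d. unfold be; rewrite Rminus_0_r; ring.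
  unfold be1; rewrite Rminus_0_r; field; lra. Qed.
Lemma be1_d w t : 0 < w -> is_derive (be1 w) t (be2 w t).
Proof. intros Hw. cg (be1 w) th1 th2 w 0 (-/w) 0 Hw th1_d. unfold be1; rewrite Rminus_0_r; field; lra.
  unfold be2; rewrite Rminus_0_r; field; lra. Qed.
Lemma be2_d w t : 0 < w -> is_derive (be2 w) t (be3 w t).
Proof. intros Hw. cg (be2 w) th2 th3 w 0 (-/w^2) 0 Hw th2_d. unfold be2; rewrite Rminus_0_r; field; lra.
  unfold be3; rewrite Rminus_0_r; field; lra. Qed.

Lemma D_al w t : 0 < w -> Derive (fun x => al w x) t = al1 w t.
Proof. intros; apply is_derive_unique, al_d; auto. Qed.
Lemma D_al1 w t : 0 < w -> Derive (fun x => al1 w x) t = al2 w t.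
Proof. intros; apply is_derive_unique, al1_d; auto. Qed.
Lemma D_al2 w t : 0 < w -> Derive (fun x => al2 w x) t = al3 w t.
Proof. intros; apply is_derive_unique, al2_d; auto. Qed.
Lemma D_be w t : 0 < w -> Derive (fun x => be w x) t = be1 w t.
Proof. intros; apply is_derive_unique, be_d; auto. Qed.
Lemma D_be1 w t : 0 < w -> Derive (fun x => be1 w x) t = be2 w t.
Proof. intros; apply is_derive_unique, be1_d; auto. Qed.
Lemma D_be2 w t : 0 < w -> Derive (fun x => be2 w x) t = be3 w t.
Proof. intros; apply is_derive_unique, be2_d; auto. Qed.

Lemma E_al w t : 0 < w -> ex_derive (fun x => al w x) t.
Proof. intros; eexists; apply al_d; auto. Qed.
Lemma E_al1 w t : 0 < w -> ex_derive (fun x => al1 w x) t.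
Proof. intros; eexists; apply al1_d; auto. Qed.
Lemma E_al2 w t : 0 < w -> ex_derive (fun x => al2 w x) t.
Proof. intros; eexists; apply al2_d; auto. Qed.
Lemma E_be w t : 0 < w -> ex_derive (fun x => be w x) t.
Proof. intros; eexists; apply be_d; auto. Qed.
Lemma E_be1 w t : 0 < w -> ex_derive (fun x => be1 w x) t.
Proof. intros; eexists; apply be1_d; auto. Qed.
Lemma E_be2 w t : 0 < w -> ex_derive (fun x => be2 w x) t.
Proof. intros; eexists; apply be2_d; auto. Qed.

Ltac solve_ex w Hw := repeat split; try apply (E_al w _ Hw); try apply (E_al1 w _ Hw); try apply (E_al2 w _ Hw);
  try apply (E_be w _ Hw); try apply (E_be1 w _ Hw); try apply (E_be2 w _ Hw).
Ltac rw_D w Hw := repeat first [rewrite (D_al w _ Hw) | rewrite (D_al1 w _ Hw) | rewrite (D_al2 w _ Hw)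
  | rewrite (D_be w _ Hw) | rewrite (D_be1 w _ Hw) | rewrite (D_be2 w _ Hw)].

Definition U (K K' w : R) : fn3 := fun x y t =>
  al w t * (cos (K * x) * exp (- K * t)) + be w t * (cos (K' * y) * exp (- K' * t)).

Lemma u_eq k k' w : 0 < w -> u_fun k k' w = U (INR k) (INR k') w.
Proof.
  intros Hw. apply functional_extensionality; intro x. apply functional_extensionality; intro y.
  apply functional_extensionality; intro t.
  unfold u_fun, U, f_fun, g_fun, al, be.
  destruct (Rle_dec t w).
  - rewrite (theta_le0 ((t - w) / w)). ring.
    apply Rmult_le_reg_r with w; auto. unfold Rdiv. rewrite Rmult_assoc, Rinv_l; lra.
  - rewrite (theta_ge1 (t / w)). ring.
    apply Rmult_le_reg_r with w; auto. unfold Rdiv. rewrite Rmult_assoc, Rinv_l; lra.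
Qed.

Definition Ux (K K' w : R) : fn3 := fun x y t => - K * al w t * sin (K * x) * exp (- K * t).
Definition Uy (K K' w : R) : fn3 := fun x y t => - K' * be w t * sin (K' * y) * exp (- K' * t).
Definition Ut (K K' w : R) : fn3 := fun x y t =>
  (al1 w t - K * al w t) * cos (K * x) * exp (- K * t) + (be1 w t - K' * be w t) * cos (K' * y) * exp (- K' * t).

Lemma pdx_U K K' w : pd Defs.Dx (U K K' w) = Ux K K' w.
Proof.
  apply functional_extensionality; intro x. apply functional_extensionality; intro y.
  apply functional_extensionality; intro t. simpl. apply is_derive_unique. unfold U, Ux.
  auto_derive. easy. ring.
Qed.

Lemma pdt_U K K' w : 0 < w -> pd Dt (U K K' w) = Ut K K' w.
Proof.
  intros Hw.
  apply functional_extensionality; intro x. apply functional_extensionality; intro y.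
  apply functional_extensionality; intro t. simpl. apply is_derive_unique. unfold U, Ut.
  auto_derive. solve_ex w Hw. rw_D w Hw. ring.
Qed.

Definition Uxx (K K' w : R) : fn3 := fun x y t => - K * K * al w t * cos (K * x) * exp (- K * t).
Definition Uyy (K K' w : R) : fn3 := fun x y t => - K' * K' * be w t * cos (K' * y) * exp (- K' * t).
Definition Utx (K K' w : R) : fn3 := fun x y t => - K * (al1 w t - K * al w t) * sin (K * x) * exp (- K * t).
Definition Uty (K K' w : R) : fn3 := fun x y t => - K' * (be1 w t - K' * be w t) * sin (K' * y) * exp (- K' * t).
Definition Utt (K K' w : R) : fn3 := fun x y t =>
  (al2 w t - 2 * K * al1 w t + K * K * al w t) * cos (K * x) * exp (- K * t)
  + (be2 w t - 2 * K' * be1 w t + K' * K' * be w t) * cos (K' * y) * exp (- K' * t).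
Definition Zf3 : fn3 := fun _ _ _ => 0.

Ltac ext3 := apply functional_extensionality; intro x; apply functional_extensionality; intro y;
  apply functional_extensionality; intro t; simpl; apply is_derive_unique.

Lemma pdy_U K K' w : pd Dy (U K K' w) = Uy K K' w.
Proof. ext3. unfold U, Uy. auto_derive. easy. ring. Qed.
Lemma pdx_Ux K K' w : pd Defs.Dx (Ux K K' w) = Uxx K K' w.
Proof. ext3. unfold Ux, Uxx. auto_derive. easy. ring. Qed.
Lemma pdy_Ux K K' w : pd Dy (Ux K K' w) = Zf3.
Proof. ext3. unfold Ux, Zf3. auto_derive. easy. ring. Qed.
Lemma pdt_Ux K K' w : 0 < w -> pd Dt (Ux K K' w) = Utx K K' w.
Proof. intros Hw. ext3. unfold Ux, Utx. auto_derive. solve_ex w Hw. rw_D w Hw. ring. Qed.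
Lemma pdx_Uy K K' w : pd Defs.Dx (Uy K K' w) = Zf3.
Proof. ext3. unfold Uy, Zf3. auto_derive. easy. ring. Qed.
Lemma pdy_Uy K K' w : pd Dy (Uy K K' w) = Uyy K K' w.
Proof. ext3. unfold Uy, Uyy. auto_derive. easy. ring. Qed.
Lemma pdt_Uy K K' w : 0 < w -> pd Dt (Uy K K' w) = Uty K K' w.
Proof. intros Hw. ext3. unfold Uy, Uty. auto_derive. solve_ex w Hw. rw_D w Hw. ring. Qed.
Lemma pdx_Ut K K' w : pd Defs.Dx (Ut K K' w) = Utx K K' w.
Proof. ext3. unfold Ut, Utx. auto_derive. easy. ring. Qed.
Lemma pdy_Ut K K' w : pd Dy (Ut K K' w) = Uty K K' w.
Proof. ext3. unfold Ut, Uty. auto_derive. easy. ring. Qed.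
Lemma pdt_Ut K K' w : 0 < w -> pd Dt (Ut K K' w) = Utt K K' w.
Proof. intros Hw. ext3. unfold Ut, Utt. auto_derive. solve_ex w Hw. rw_D w Hw. ring. Qed.

Definition ca (K K' w t : R) : R := (be2 w t - 2 * K' * be1 w t) * exp (- (K' - K) * t) / (K * K).
Definition cb (K K' w t : R) : R := (al2 w t - 2 * K * al1 w t) * exp ((K' - K) * t) / (K' * K').

Definition Amat (K K' w : R) (i j : sdir) : fn3 :=
  match i, j with
  | Sx, Sx => fun x y t => 1 + ca K K' w t * cos (K * x) * cos (K' * y)
  | Sx, Sy => fun x y t => cb K K' w t * (2 * K' / K) * sin (K * x) * sin (K' * y)
  | Sy, Sx => fun x y t => ca K K' w t * (2 * K / K') * sin (K * x) * sin (K' * y)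
  | Sy, Sy => fun x y t => 1 + cb K K' w t * cos (K * x) * cos (K' * y)
  end.

Lemma div_le w t : 0 < w -> t <= w -> (t - w) / w <= 0.
Proof. intros. apply Rmult_le_reg_r with w; auto. unfold Rdiv. rewrite Rmult_assoc, Rinv_l; lra. Qed.
Lemma div_lt w t : 0 < w -> t < w -> (t - w) / w < 0.
Proof. intros. apply Rmult_lt_reg_r with w; auto. unfold Rdiv. rewrite Rmult_assoc, Rinv_l; lra. Qed.
Lemma div_ge w t : 0 < w -> w <= t -> 1 <= t / w.
Proof. intros. apply Rmult_le_reg_r with w; auto. unfold Rdiv. rewrite Rmult_assoc, Rinv_l; lra. Qed.

Lemma supp1 K' w t : 0 < w -> al w t * (be2 w t - 2 * K' * be1 w t) = be2 w t - 2 * K' * be1 w t.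
Proof.
  intros Hw. destruct (Rle_dec t w).
  - unfold al. rewrite theta_le0 by (apply div_le; auto). ring.
  - unfold be1, be2, th1, th2. rewrite !thd_out. field. lra.
    right; apply div_ge; lra. right; apply div_ge; lra.
Qed.

Lemma supp2 K w t : 0 < w -> be w t * (al2 w t - 2 * K * al1 w t) = al2 w t - 2 * K * al1 w t.
Proof.
  intros Hw. destruct (Rle_dec w t).
  - unfold be. rewrite theta_ge1 by (apply div_ge; auto). ring.
  - unfold al1, al2, th1, th2. rewrite !thd_out. field. lra.
    left; apply Rlt_le, div_lt; lra. left; apply Rlt_le, div_lt; lra.
Qed.

Lemma alg (al al1 al2 be be1 be2 K K' c1 s1 c2 s2 e1 e2 a b : R) :
  s1 * s1 + c1 * c1 = 1 -> s2 * s2 + c2 * c2 = 1 ->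
  a * K * K * al * e1 = (be2 - 2 * K' * be1) * e2 ->
  b * K' * K' * be * e2 = (al2 - 2 * K * al1) * e1 ->
  ((al2 - 2 * K * al1 + K * K * al) * c1 * e1 + (be2 - 2 * K' * be1 + K' * K' * be) * c2 * e2)
  + (- K * K * al * e1 * (c1 + a * c2 * (c1 * c1 - s1 * s1)) - 2 * K' * K' * b * be * e2 * c1 * s2 * s2)
  + (- 2 * K * K * a * al * e1 * s1 * s1 * c2 - K' * K' * be * e2 * (c2 + b * c1 * (c2 * c2 - s2 * s2)))
  = 0.
Proof.
  intros H1 H2 H3 H4.
  match goal with |- ?L = 0 => transitivity ((al2 - 2 * K * al1) * e1 * c1 + (be2 - 2 * K' * be1) * e2 * c2
    - (a * K * K * al * e1) * c2 * (s1 * s1 + c1 * c1) - (b * K' * K' * be * e2) * c1 * (s2 * s2 + c2 * c2)) end.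
  ring. rewrite H1, H2, H3, H4. ring.
Qed.

Lemma wave_U K K' w x y t : 0 < w -> 0 < K -> 0 < K' ->
  wave_op (Amat K K' w) (U K K' w) x y t = 0.
Proof.
  intros Hw HK HK'. unfold wave_op.
  rewrite (pdt_U K K' w Hw), (pdt_Ut K K' w Hw), pdx_U, pdy_U.
  assert (EX : pd Defs.Dx (fun x y t => Amat K K' w Sx Sx x y t * Ux K K' w x y t + Amat K K' w Sx Sy x y t * Uy K K' w x y t) x y t
    = - K * K * al w t * exp (- K * t) * (cos (K * x) + ca K K' w t * cos (K' * y) * (cos (K * x) * cos (K * x) - sin (K * x) * sin (K * x)))
      - 2 * K' * K' * cb K K' w t * be w t * exp (- K' * t) * cos (K * x) * sin (K' * y) * sin (K' * y)).
  { simpl. apply is_derive_unique. unfold Ux, Uy. auto_derive. easy. field. lra. }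
  assert (EY : pd Dy (fun x y t => Amat K K' w Sy Sx x y t * Ux K K' w x y t + Amat K K' w Sy Sy x y t * Uy K K' w x y t) x y t
    = - 2 * K * K * ca K K' w t * al w t * exp (- K * t) * sin (K * x) * sin (K * x) * cos (K' * y)
      - K' * K' * be w t * exp (- K' * t) * (cos (K' * y) + cb K K' w t * cos (K * x) * (cos (K' * y) * cos (K' * y) - sin (K' * y) * sin (K' * y)))).
  { simpl. apply is_derive_unique. unfold Ux, Uy. auto_derive. easy. field. lra. }
  rewrite EX, EY. unfold Utt.
  apply alg.
  - assert (H := sin2_cos2 (K * x)). unfold Rsqr in H. auto.
  - assert (H := sin2_cos2 (K' * y)). unfold Rsqr in H. auto.
  - unfold ca. 
    transitivity (al w t * (be2 w t - 2 * K' * be1 w t) * (exp (- (K' - K) * t) * exp (- K * t))).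
    field. lra. rewrite supp1 by auto. rewrite <- exp_plus. f_equal. f_equal. ring.
  - unfold cb. 
    transitivity (be w t * (al2 w t - 2 * K * al1 w t) * (exp ((K' - K) * t) * exp (- K' * t))).
    field. lra. rewrite supp2 by auto. rewrite <- exp_plus. f_equal. f_equal. ring.
Qed.


Lemma cont3_of (F : fn3) :
  (forall x y t, @continuous (prod_UniformSpace (prod_UniformSpace R_UniformSpace R_UniformSpace) R_UniformSpace) R_UniformSpace
     (fun v => F (fst (fst v)) (snd (fst v)) (snd v)) ((x,y),t)) -> cont3 F.
Proof.
  intros H x y t eps He.
  specialize (H x y t). apply filterlim_locally with (eps := mkposreal _ He) in H.
  destruct H as [d Hd]. exists d. split. apply cond_pos.
  intros x' y' t' H1 H2 H3.
  specialize (Hd ((x',y'),t')). simpl in Hd. apply Hd.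
  split; [split|]; assumption.
Qed.

Definition Sep (c : R) (g p q : R -> R) : fn3 := fun x y t => c + g t * p x * q y.

Lemma cont3_Sep c g p q : (forall t, continuous g t) -> (forall x, continuous p x) -> (forall y, continuous q y) ->
  cont3 (Sep c g p q).
Proof.
  intros Hg Hp Hq. apply cont3_of. intros x y t. unfold Sep. simpl.
  apply (@continuous_plus _ R_AbsRing R_NormedModule (fun _ => c) (fun v => g (snd v) * p (fst (fst v)) * q (snd (fst v)))).
  apply continuous_const.
  apply (@continuous_mult _ R_AbsRing (fun v => g (snd v) * p (fst (fst v))) (fun v => q (snd (fst v)))).
  apply (@continuous_mult _ R_AbsRing (fun v => g (snd v)) (fun v => p (fst (fst v)))).
  - apply continuous_comp. apply continuous_snd. apply Hg.
  - apply (continuous_comp (fun v : (R*R)*R => fst (fst v)) p).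
    apply (continuous_comp (fst : (R*R)*R -> R*R) (fst : R*R -> R)).
    apply continuous_fst. apply continuous_fst. apply Hp.
  - apply (continuous_comp (fun v : (R*R)*R => snd (fst v)) q).
    apply (continuous_comp (fst : (R*R)*R -> R*R) (snd : R*R -> R)).
    apply continuous_fst. apply continuous_snd. apply Hq.
Qed.

Lemma Sep_dx c g p q p' : (forall x, is_derive p x (p' x)) -> pd Defs.Dx (Sep c g p q) = Sep 0 g p' q.
Proof.
  intros Hp. apply functional_extensionality; intro x. apply functional_extensionality; intro y.
  apply functional_extensionality; intro t. simpl. apply is_derive_unique. unfold Sep.
  auto_derive. eexists; apply Hp. change (fun x => p x) with p. rewrite (is_derive_unique _ _ _ (Hp x)). ring.
Qed.
Lemma Sep_dy c g p q q' : (forall y, is_derive q y (q' y)) -> pd Dy (Sep c g p q) = Sep 0 g p q'.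
Proof.
  intros Hq. apply functional_extensionality; intro x. apply functional_extensionality; intro y.
  apply functional_extensionality; intro t. simpl. apply is_derive_unique. unfold Sep.
  auto_derive. eexists; apply Hq. change (fun x => q x) with q. rewrite (is_derive_unique _ _ _ (Hq y)). ring.
Qed.
Lemma Sep_dt c g p q g' : (forall t, is_derive g t (g' t)) -> pd Dt (Sep c g p q) = Sep 0 g' p q.
Proof.
  intros Hg. apply functional_extensionality; intro x. apply functional_extensionality; intro y.
  apply functional_extensionality; intro t. simpl. apply is_derive_unique. unfold Sep.
  auto_derive. eexists; apply Hg. change (fun x => g x) with g. rewrite (is_derive_unique _ _ _ (Hg t)). ring.
Qed.

Lemma Sep_ex c g p q p' q' g' : (forall x, is_derive p x (p' x)) -> (forall y, is_derive q y (q' y)) ->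
  (forall t, is_derive g t (g' t)) -> forall d x y t, ex_pd d (Sep c g p q) x y t.
Proof.
  intros Hp Hq Hg d x y t. destruct d; simpl; unfold Sep; auto_derive.
  eexists; apply Hp. eexists; apply Hq. eexists; apply Hg.
Qed.

Lemma cont_of_is_derive (f : R -> R) x l : is_derive f x l -> continuous f x.
Proof. intros H. apply (@ex_derive_continuous R_AbsRing R_NormedModule). exists l; auto. Qed.

Lemma C1_Sep c g p q p' q' g' : (forall x, is_derive p x (p' x)) -> (forall y, is_derive q y (q' y)) ->
  (forall t, is_derive g t (g' t)) -> (forall x, continuous p' x) -> (forall y, continuous q' y) ->
  (forall t, continuous g' t) -> is_C1 (Sep c g p q).
Proof.
  intros Hp Hq Hg Cp Cq Cg. split.
  apply cont3_Sep; intros; eapply cont_of_is_derive; eauto.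
  intros d. split. intros; eapply Sep_ex; eauto.
  destruct d.
  - rewrite (Sep_dx c g p q p' Hp). apply cont3_Sep; auto; intros; eapply cont_of_is_derive; eauto.
  - rewrite (Sep_dy c g p q q' Hq). apply cont3_Sep; auto; intros; eapply cont_of_is_derive; eauto.
  - rewrite (Sep_dt c g p q g' Hg). apply cont3_Sep; auto; intros; eapply cont_of_is_derive; eauto.
Qed.

Lemma per_Sep c g p q : (forall x, p (x + 2 * PI) = p x) -> (forall y, q (y + 2 * PI) = q y) -> periodic2 (Sep c g p q).
Proof. intros Hp Hq x y t. unfold Sep. rewrite Hp, Hq. auto. Qed.

Lemma cos_per (k : nat) x : cos (INR k * (x + 2 * PI)) = cos (INR k * x).
Proof. replace (INR k * (x + 2 * PI)) with (INR k * x + 2 * INR k * PI) by ring. apply cos_period. Qed.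
Lemma sin_per (k : nat) x : sin (INR k * (x + 2 * PI)) = sin (INR k * x).
Proof. replace (INR k * (x + 2 * PI)) with (INR k * x + 2 * INR k * PI) by ring. apply sin_period. Qed.

Lemma cos_d K x : is_derive (fun x => cos (K * x)) x (- K * sin (K * x)).
Proof. auto_derive. easy. ring. Qed.
Lemma sin_d K x : is_derive (fun x => sin (K * x)) x (K * cos (K * x)).
Proof. auto_derive. easy. ring. Qed.
Lemma cos_c K x : continuous (fun x => - K * sin (K * x)) x.
Proof. apply (@ex_derive_continuous R_AbsRing R_NormedModule). auto_derive. easy. Qed.
Lemma sin_c K x : continuous (fun x => K * cos (K * x)) x.
Proof. apply (@ex_derive_continuous R_AbsRing R_NormedModule). auto_derive. easy. Qed.

Lemma cont_fgh (f g h : R -> R) (x : R) : continuous f x -> ex_derive g x -> ex_derive h x ->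
  continuous (fun t => f t * g t + h t) x.
Proof.
  intros Hf Hg Hh. apply continuity_pt_filterlim.
  apply continuity_pt_ext with (f := (f * g + h)%F). intros; reflexivity.
  apply continuity_pt_plus. apply continuity_pt_mult.
  apply continuity_pt_filterlim; auto.
  apply continuity_pt_filterlim, (@ex_derive_continuous R_AbsRing R_NormedModule); auto.
  apply continuity_pt_filterlim, (@ex_derive_continuous R_AbsRing R_NormedModule); auto.
Qed.

Lemma th3_comp_cont w c t : 0 < w -> continuous (fun t => th3 ((t - c) / w)) t.
Proof.
  intros Hw. apply (continuous_comp (fun t => (t - c) / w) th3).
  apply (@ex_derive_continuous R_AbsRing R_NormedModule). auto_derive. easy.
  apply th3_cont.
Qed.

Lemma continuous_extR (f g : R -> R) (x : R) : (forall t, f t = g t) -> continuous f x -> continuous g x.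
Proof. intros H. apply continuous_ext. auto. Qed.

Definition dca (K K' w t : R) : R :=
  ((be3 w t - 2 * K' * be2 w t) * exp (- (K' - K) * t)
   + (be2 w t - 2 * K' * be1 w t) * (- (K' - K)) * exp (- (K' - K) * t)) / (K * K).
Definition dcb (K K' w t : R) : R :=
  ((al3 w t - 2 * K * al2 w t) * exp ((K' - K) * t)
   + (al2 w t - 2 * K * al1 w t) * (K' - K) * exp ((K' - K) * t)) / (K' * K').

Lemma ca_d K K' w t : 0 < w -> 0 < K -> is_derive (ca K K' w) t (dca K K' w t).
Proof.
  intros Hw HK. unfold ca, dca. auto_derive. solve_ex w Hw. rw_D w Hw. field. lra.
Qed.
Lemma cb_d K K' w t : 0 < w -> 0 < K' -> is_derive (cb K K' w) t (dcb K K' w t).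
Proof.
  intros Hw HK. unfold cb, dcb. auto_derive. solve_ex w Hw. rw_D w Hw. field. lra.
Qed.

Lemma dca_c K K' w t : 0 < w -> 0 < K -> continuous (dca K K' w) t.
Proof.
  intros Hw HK.
  apply (continuous_extR (fun t => th3 ((t - 0) / w) * (- exp (- (K' - K) * t) / (w^3 * (K * K)))
     + ((- 2 * K' * be2 w t) * exp (- (K' - K) * t)
   + (be2 w t - 2 * K' * be1 w t) * (- (K' - K)) * exp (- (K' - K) * t)) / (K * K))).
  { intros s. unfold dca, be3. rewrite Rminus_0_r. field. repeat split; (lra || (apply pow_nonzero; lra)). }
  apply cont_fgh. apply th3_comp_cont; auto.
  auto_derive. easy.
  auto_derive. solve_ex w Hw.
Qed.
Lemma dcb_c K K' w t : 0 < w -> 0 < K' -> continuous (dcb K K' w) t.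
Proof.
  intros Hw HK.
  apply (continuous_extR (fun t => th3 ((t - w) / w) * (exp ((K' - K) * t) / (w^3 * (K' * K')))
     + ((- 2 * K * al2 w t) * exp ((K' - K) * t)
   + (al2 w t - 2 * K * al1 w t) * (K' - K) * exp ((K' - K) * t)) / (K' * K'))).
  { intros s. unfold dcb, al3. field. repeat split; (lra || (apply pow_nonzero; lra)). }
  apply cont_fgh. apply th3_comp_cont; auto.
  auto_derive. easy.
  auto_derive. solve_ex w Hw.
Qed.

Lemma Amat_xx K K' w : Amat K K' w Sx Sx = Sep 1 (ca K K' w) (fun x => cos (K * x)) (fun y => cos (K' * y)).
Proof. reflexivity. Qed.
Lemma Amat_xy K K' w : Amat K K' w Sx Sy = Sep 0 (fun t => cb K K' w t * (2 * K' / K)) (fun x => sin (K * x)) (fun y => sin (K' * y)).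
Proof. apply functional_extensionality; intro x. apply functional_extensionality; intro y.
  apply functional_extensionality; intro t. simpl. unfold Sep. ring. Qed.
Lemma Amat_yx K K' w : Amat K K' w Sy Sx = Sep 0 (fun t => ca K K' w t * (2 * K / K')) (fun x => sin (K * x)) (fun y => sin (K' * y)).
Proof. apply functional_extensionality; intro x. apply functional_extensionality; intro y.
  apply functional_extensionality; intro t. simpl. unfold Sep. ring. Qed.
Lemma Amat_yy K K' w : Amat K K' w Sy Sy = Sep 1 (cb K K' w) (fun x => cos (K * x)) (fun y => cos (K' * y)).
Proof. reflexivity. Qed.

Lemma scal_d (g : R -> R) g' c : (forall t, is_derive g t (g' t)) -> forall t, is_derive (fun t => g t * c) t (g' t * c).
Proof. intros H t. eapply is_derive_eq. auto_derive. eexists; apply H. change (fun x => g x) with g.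
  reflexivity. rewrite (is_derive_unique _ _ _ (H t)). ring. Qed.
Lemma scal_c (g : R -> R) c : (forall t, continuous g t) -> forall t, continuous (fun t => g t * c) t.
Proof. intros H t. apply (continuous_extR (fun t => g t * c + 0)). intros; ring.
  apply cont_fgh; auto. auto_derive; easy. auto_derive; easy. Qed.

Lemma ca_zero K K' w t : 0 < w -> 0 < K -> t <= 0 \/ w <= t -> ca K K' w t = 0 /\ dca K K' w t = 0.
Proof.
  intros Hw HK Ht. assert (H : t / w <= 0 \/ 1 <= t / w).
  { assert (0 < / w) by (apply Rinv_0_lt_compat; lra). destruct Ht. left. unfold Rdiv. nra.
    right. apply div_ge; auto. }
  unfold ca, dca, be1, be2, be3, th1, th2, th3. rewrite !thd_out by auto. split; field; lra.
Qed.
Lemma cb_zero K K' w t : 0 < w -> 0 < K' -> t <= w \/ 2 * w <= t -> cb K K' w t = 0 /\ dcb K K' w t = 0.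
Proof.
  intros Hw HK Ht. assert (H : (t - w) / w <= 0 \/ 1 <= (t - w) / w).
  { destruct Ht. left. apply div_le; auto.
    right. apply Rmult_le_reg_r with w; auto. unfold Rdiv. rewrite Rmult_assoc, Rinv_l; lra. }
  unfold cb, dcb, al1, al2, al3, th1, th2, th3. rewrite !thd_out by auto. split; field; lra.
Qed.

Lemma partA (k k' : nat) (w : R) : 0 < w -> (0 < k)%nat -> (0 < k')%nat ->
  (forall i j, is_C1 (Amat (INR k) (INR k') w i j) /\ periodic2 (Amat (INR k) (INR k') w i j)) /\
  (forall i j x y t, (t <= 0 \/ 2 * w <= t) -> Amat (INR k) (INR k') w i j x y t = delta i j).
Proof.
  intros Hw Hk Hk'.
  assert (HK : 0 < INR k) by (apply lt_0_INR; auto).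
  assert (HK' : 0 < INR k') by (apply lt_0_INR; auto).
  split.
  - intros i j. destruct i, j.
    + rewrite Amat_xx. split.
      eapply C1_Sep. intros; apply cos_d. intros; apply cos_d. intros; apply ca_d; auto.
      intros; apply cos_c. intros; apply cos_c. intros; apply dca_c; auto.
      apply per_Sep; intros; apply cos_per.
    + rewrite Amat_xy. split.
      eapply C1_Sep. intros; apply sin_d. intros; apply sin_d. apply scal_d. intros; apply cb_d; auto.
      intros; apply sin_c. intros; apply sin_c. apply scal_c. intros; apply dcb_c; auto.
      apply per_Sep; intros; apply sin_per.
    + rewrite Amat_yx. split.
      eapply C1_Sep. intros; apply sin_d. intros; apply sin_d. apply scal_d. intros; apply ca_d; auto.
      intros; apply sin_c. intros; apply sin_c. apply scal_c. intros; apply dca_c; auto.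
      apply per_Sep; intros; apply sin_per.
    + rewrite Amat_yy. split.
      eapply C1_Sep. intros; apply cos_d. intros; apply cos_d. intros; apply cb_d; auto.
      intros; apply cos_c. intros; apply cos_c. intros; apply dcb_c; auto.
      apply per_Sep; intros; apply cos_per.
  - intros i j x y t Ht.
    assert (Ha : ca (INR k) (INR k') w t = 0) by (apply ca_zero; auto; lra).
    assert (Hb : cb (INR k) (INR k') w t = 0) by (apply cb_zero; auto; lra).
    destruct i, j; simpl; rewrite ?Ha, ?Hb; ring.
Qed.


Lemma Rabs_div_pos x y : 0 < y -> Rabs (x / y) = Rabs x / y.
Proof. intros. unfold Rdiv. rewrite Rabs_mult, Rabs_inv, (Rabs_right y) by lra. auto. Qed.

Lemma al_bd w t : Rabs (al w t) <= 1 + Kth.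
Proof. apply theta_bd. Qed.
Lemma be_bd w t : Rabs (be w t) <= 2 + Kth.
Proof. unfold be. eapply Rle_trans. apply Rabs_triang. rewrite Rabs_Ropp, Rabs_R1.
  assert (H := theta_bd (t / w)). lra. Qed.

Lemma al1_bd w t : 0 < w -> Rabs (al1 w t) <= Kth * / w.
Proof. intros. unfold al1. rewrite Rabs_div_pos by auto. unfold Rdiv. apply Rmult_le_compat_r.
  left; apply Rinv_0_lt_compat; auto. apply th1_bd. Qed.
Lemma be1_bd w t : 0 < w -> Rabs (be1 w t) <= Kth * / w.
Proof. intros. unfold be1. rewrite Rabs_div_pos by auto. rewrite Rabs_Ropp. unfold Rdiv. apply Rmult_le_compat_r.
  left; apply Rinv_0_lt_compat; auto. apply th1_bd. Qed.
Lemma al2_bd w t : 0 < w -> Rabs (al2 w t) <= Kth * / w ^ 2.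
Proof. intros. unfold al2. rewrite Rabs_div_pos by (apply pow_lt; auto). unfold Rdiv. apply Rmult_le_compat_r.
  left; apply Rinv_0_lt_compat, pow_lt; auto. apply th2_bd. Qed.
Lemma be2_bd w t : 0 < w -> Rabs (be2 w t) <= Kth * / w ^ 2.
Proof. intros. unfold be2. rewrite Rabs_div_pos by (apply pow_lt; auto). rewrite Rabs_Ropp. unfold Rdiv. apply Rmult_le_compat_r.
  left; apply Rinv_0_lt_compat, pow_lt; auto. apply th2_bd. Qed.
Lemma al3_bd w t : 0 < w -> Rabs (al3 w t) <= Kth * / w ^ 3.
Proof. intros. unfold al3. rewrite Rabs_div_pos by (apply pow_lt; auto). unfold Rdiv. apply Rmult_le_compat_r.
  left; apply Rinv_0_lt_compat, pow_lt; auto. apply th3_bd. Qed.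
Lemma be3_bd w t : 0 < w -> Rabs (be3 w t) <= Kth * / w ^ 3.
Proof. intros. unfold be3. rewrite Rabs_div_pos by (apply pow_lt; auto). rewrite Rabs_Ropp. unfold Rdiv. apply Rmult_le_compat_r.
  left; apply Rinv_0_lt_compat, pow_lt; auto. apply th3_bd. Qed.

Definition Rr1 (C0 : R) : R := 1 + C0 ^ 2.
Definition X2 (C0 : R) : R := Kth * (C0 + 2 * Rr1 C0) * exp (2 * C0).
Definition Y2 (C0 : R) : R := Kth * (1 + C0) * (C0 ^ 2 + 2 * Rr1 C0 * C0) * exp (2 * C0).

Lemma Kth_ge0 : 0 <= Kth.
Proof. left; apply Kth_pos. Qed.

Lemma hyp_Rr1 C0 K K' w : 1 <= C0 -> 0 < w -> 0 < K -> K' - K <= C0 / w -> / w <= C0 * K -> K' <= Rr1 C0 * K.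
Proof. intros. unfold Rr1. unfold Rdiv in *. assert (C0 * / w <= C0 * (C0 * K)) by (apply Rmult_le_compat_l; lra). nra. Qed.

Lemma exp_le1 x : x <= 0 -> exp x <= 1.
Proof. intros. rewrite <- exp_0. destruct (Req_dec x 0). subst; lra. left; apply exp_increasing; lra. Qed.

Lemma exp_2C0 C0 K K' w t : 0 < w -> t <= 2 * w -> 0 <= K' - K -> K' - K <= C0 / w -> exp ((K' - K) * t) <= exp (2 * C0).
Proof.
  intros Hw Ht H1 H2. destruct (Req_dec ((K' - K) * t) (2 * C0)) as [E|E]. rewrite E; lra.
  left. apply exp_increasing.
  assert ((K' - K) * t <= C0 / w * (2 * w)).
  { destruct (Rle_dec 0 t). apply Rle_trans with ((K' - K) * (2 * w)). apply Rmult_le_compat_l; lra.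
    apply Rmult_le_compat_r; lra. apply Rle_trans with 0. nra.
    assert (0 <= C0 / w). { eapply Rle_trans. apply H1. auto. } nra. }
  replace (C0 / w * (2 * w)) with (2 * C0) in H by (field; lra). lra.
Qed.

Lemma ca_bd C0 K K' w t : 1 <= C0 -> 0 < w -> 0 < K -> K <= K' -> K' - K <= C0 / w -> / w <= C0 * K ->
  Rabs (ca K K' w t) <= X2 C0 * / w / K.
Proof.
  intros HC Hw HK HKK H1 H2.
  assert (HR := hyp_Rr1 C0 K K' w HC Hw HK H1 H2).
  assert (Ha : 0 < / w) by (apply Rinv_0_lt_compat; auto).
  assert (HT := Kth_ge0).
  assert (Xp : 0 <= X2 C0 * / w / K).
  { unfold X2, Rr1. apply Rmult_le_pos. apply Rmult_le_pos. apply Rmult_le_pos. apply Rmult_le_pos. auto.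
    nra. left; apply exp_pos. lra. left; apply Rinv_0_lt_compat; auto. }
  destruct (Rle_dec t 0) as [Ht|Ht]. { rewrite (proj1 (ca_zero K K' w t Hw HK ltac:(lra))), Rabs_R0. auto. }
  destruct (Rle_dec w t) as [Ht2|Ht2]. { rewrite (proj1 (ca_zero K K' w t Hw HK ltac:(lra))), Rabs_R0. auto. }
  unfold ca. rewrite Rabs_div_pos by nra. rewrite Rabs_mult, (Rabs_right (exp _)) by (left; apply exp_pos).
  set (a := / w) in *.
  assert (B1 := be1_bd w t Hw). assert (B2 := be2_bd w t Hw). fold a in B1.
  replace (/ w ^ 2) with (a * a) in B2 by (unfold a; field; lra).
  assert (E : exp (- (K' - K) * t) <= 1) by (apply exp_le1; nra).
  assert (E2 : 1 <= exp (2 * C0)) by (rewrite <- exp_0; destruct (Req_dec C0 0); [lra| left; apply exp_increasing; lra]).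
  assert (N : Rabs (be2 w t - 2 * K' * be1 w t) <= Kth * a * (a + 2 * K')).
  { unfold Rminus. eapply Rle_trans. apply Rabs_triang. rewrite Rabs_Ropp, !Rabs_mult, (Rabs_right 2) by lra.
    rewrite (Rabs_right K') by lra. assert (2 * K' * Rabs (be1 w t) <= 2 * K' * (Kth * a)) by (apply Rmult_le_compat_l; lra).
    nra. }
  assert (N2 : Kth * a * (a + 2 * K') <= Kth * (C0 + 2 * Rr1 C0) * a * K).
  { assert (a + 2 * K' <= (C0 + 2 * Rr1 C0) * K) by nra.
    assert (0 <= Kth * a) by nra.
    replace (Kth * (C0 + 2 * Rr1 C0) * a * K) with ((Kth * a) * ((C0 + 2 * Rr1 C0) * K)) by ring.
    apply Rmult_le_compat_l; auto. }
  apply Rmult_le_reg_r with (K * K). nra.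
  unfold Rdiv. rewrite Rmult_assoc, Rinv_l, Rmult_1_r by nra.
  apply Rle_trans with (Kth * a * (a + 2 * K') * 1).
  { apply Rmult_le_compat; try apply Rabs_pos; try (left; apply exp_pos). auto. auto. }
  unfold X2. rewrite Rmult_1_r.
  replace (Kth * (C0 + 2 * Rr1 C0) * exp (2 * C0) * a * / K * (K * K)) with ((Kth * (C0 + 2 * Rr1 C0) * a * K) * exp (2 * C0)) by (field; lra).
  assert (0 <= Kth * (C0 + 2 * Rr1 C0) * a * K).
  { apply Rmult_le_pos; [|lra]. apply Rmult_le_pos; [|lra]. apply Rmult_le_pos; auto. unfold Rr1. nra. }
  nra.
Qed.

Lemma cb_bd C0 K K' w t : 1 <= C0 -> 0 < w -> 0 < K -> K <= K' -> K' - K <= C0 / w -> / w <= C0 * K ->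
  Rabs (cb K K' w t) <= X2 C0 * / w / K.
Proof.
  intros HC Hw HK HKK H1 H2.
  assert (HR := hyp_Rr1 C0 K K' w HC Hw HK H1 H2).
  assert (Ha : 0 < / w) by (apply Rinv_0_lt_compat; auto).
  assert (HT := Kth_ge0).
  assert (Xp : 0 <= X2 C0 * / w / K).
  { unfold X2, Rr1. apply Rmult_le_pos. apply Rmult_le_pos. apply Rmult_le_pos. apply Rmult_le_pos. auto.
    nra. left; apply exp_pos. lra. left; apply Rinv_0_lt_compat; auto. }
  destruct (Rle_dec t w) as [Ht|Ht]. { rewrite (proj1 (cb_zero K K' w t Hw ltac:(lra) ltac:(lra))), Rabs_R0. auto. }
  destruct (Rle_dec (2 * w) t) as [Ht2|Ht2]. { rewrite (proj1 (cb_zero K K' w t Hw ltac:(lra) ltac:(lra))), Rabs_R0. auto. }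
  unfold cb. rewrite Rabs_div_pos by nra. rewrite Rabs_mult, (Rabs_right (exp _)) by (left; apply exp_pos).
  assert (E := exp_2C0 C0 K K' w t Hw ltac:(lra) ltac:(lra) H1).
  set (a := / w) in *.
  assert (B1 := al1_bd w t Hw). assert (B2 := al2_bd w t Hw). fold a in B1.
  replace (/ w ^ 2) with (a * a) in B2 by (unfold a; field; lra).
  assert (N : Rabs (al2 w t - 2 * K * al1 w t) <= Kth * a * (a + 2 * K)).
  { unfold Rminus. eapply Rle_trans. apply Rabs_triang. rewrite Rabs_Ropp, !Rabs_mult, (Rabs_right 2) by lra.
    rewrite (Rabs_right K) by lra. assert (2 * K * Rabs (al1 w t) <= 2 * K * (Kth * a)) by (apply Rmult_le_compat_l; lra).
    nra. }
  assert (N2 : Kth * a * (a + 2 * K) <= Kth * (C0 + 2 * Rr1 C0) * a * K).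
  { assert (a + 2 * K <= (C0 + 2 * Rr1 C0) * K) by (unfold Rr1 in *; nra).
    assert (0 <= Kth * a) by nra.
    replace (Kth * (C0 + 2 * Rr1 C0) * a * K) with ((Kth * a) * ((C0 + 2 * Rr1 C0) * K)) by ring.
    apply Rmult_le_compat_l; auto. }
  apply Rle_trans with (Kth * (C0 + 2 * Rr1 C0) * a * K * exp (2 * C0) / (K' * K')).
  { unfold Rdiv. apply Rmult_le_compat_r. left; apply Rinv_0_lt_compat; nra.
    apply Rmult_le_compat; try apply Rabs_pos; try (left; apply exp_pos). lra. auto. }
  unfold X2.
  assert (0 <= Kth * (C0 + 2 * Rr1 C0) * a * K * exp (2 * C0)).
  { apply Rmult_le_pos; [|left; apply exp_pos]. apply Rmult_le_pos; [|lra]. apply Rmult_le_pos; [|lra]. apply Rmult_le_pos; auto. unfold Rr1. nra. }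
  replace (Kth * (C0 + 2 * Rr1 C0) * exp (2 * C0) * a / K) with (Kth * (C0 + 2 * Rr1 C0) * a * K * exp (2 * C0) / (K * K)) by (field; lra).
  unfold Rdiv. apply Rmult_le_compat_l; auto. apply Rinv_le_contravar; nra.
Qed.

Lemma core_bd (T a K L C0 R x1 x2 x3 d e E : R) :
  0 <= T -> 0 < a -> 0 < K -> 1 <= C0 -> a <= C0 * K -> 0 <= L <= R * K -> 0 <= R ->
  Rabs d <= C0 * a -> 0 <= e <= E ->
  Rabs x1 <= T * a -> Rabs x2 <= T * (a * a) -> Rabs x3 <= T * (a * a * a) ->
  Rabs ((x3 - 2 * L * x2) * e + (x2 - 2 * L * x1) * d * e) <= T * (1 + C0) * (C0 ^ 2 + 2 * R * C0) * E * a * (K * K).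
Proof.
  intros HT Ha HK HC HaK HL HR Hd He H1 H2 H3.
  assert (A1 : Rabs (x3 - 2 * L * x2) <= T * a * (a * a + 2 * L * a)).
  { unfold Rminus. eapply Rle_trans. apply Rabs_triang. rewrite Rabs_Ropp, !Rabs_mult, (Rabs_right 2), (Rabs_right L) by lra.
    assert (2 * L * Rabs x2 <= 2 * L * (T * (a * a))) by (apply Rmult_le_compat_l; lra). nra. }
  assert (A2 : Rabs (x2 - 2 * L * x1) <= T * (a * a + 2 * L * a)).
  { unfold Rminus. eapply Rle_trans. apply Rabs_triang. rewrite Rabs_Ropp, !Rabs_mult, (Rabs_right 2), (Rabs_right L) by lra.
    assert (2 * L * Rabs x1 <= 2 * L * (T * a)) by (apply Rmult_le_compat_l; lra). nra. }
  assert (Q : a * a + 2 * L * a <= (C0 ^ 2 + 2 * R * C0) * (K * K)).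
  { assert (a * a <= C0 ^ 2 * (K * K)) by (simpl; nra).
    assert (L * a <= (R * K) * (C0 * K)) by (apply Rmult_le_compat; lra). nra. }
  set (P := a * a + 2 * L * a) in *.
  assert (0 <= P) by (unfold P; nra).
  eapply Rle_trans. apply Rabs_triang. rewrite !Rabs_mult, (Rabs_right e) by lra.
  assert (B1 : Rabs (x3 - 2 * L * x2) * e <= T * a * P * E).
  { apply Rmult_le_compat; try apply Rabs_pos; lra. }
  assert (B2 : Rabs (x2 - 2 * L * x1) * Rabs d * e <= T * P * (C0 * a) * E).
  { apply Rmult_le_compat; try lra. apply Rmult_le_pos; apply Rabs_pos.
    apply Rmult_le_compat; try apply Rabs_pos; lra. }
  apply Rle_trans with (T * a * P * E * (1 + C0)). nra.
  assert (0 <= T * a * E * (1 + C0)) by (apply Rmult_le_pos; [|lra]; apply Rmult_le_pos; [|lra]; nra).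
  replace (T * a * P * E * (1 + C0)) with ((T * a * E * (1 + C0)) * P) by ring.
  replace (T * (1 + C0) * (C0 ^ 2 + 2 * R * C0) * E * a * (K * K)) with ((T * a * E * (1 + C0)) * ((C0 ^ 2 + 2 * R * C0) * (K * K))) by ring.
  apply Rmult_le_compat_l; auto.
Qed.

Lemma dca_bd C0 K K' w t : 1 <= C0 -> 0 < w -> 0 < K -> K <= K' -> K' - K <= C0 / w -> / w <= C0 * K ->
  Rabs (dca K K' w t) <= Y2 C0 * / w.
Proof.
  intros HC Hw HK HKK H1 H2.
  assert (HR := hyp_Rr1 C0 K K' w HC Hw HK H1 H2).
  assert (Ha : 0 < / w) by (apply Rinv_0_lt_compat; auto).
  assert (HT := Kth_ge0).
  assert (Yp : 0 <= Y2 C0 * / w).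
  { unfold Y2, Rr1. apply Rmult_le_pos; [|lra]. apply Rmult_le_pos; [|left; apply exp_pos].
    apply Rmult_le_pos. apply Rmult_le_pos; lra. nra. }
  destruct (Rle_dec t 0) as [Ht|Ht]. { rewrite (proj2 (ca_zero K K' w t Hw HK ltac:(lra))), Rabs_R0. auto. }
  destruct (Rle_dec w t) as [Ht2|Ht2]. { rewrite (proj2 (ca_zero K K' w t Hw HK ltac:(lra))), Rabs_R0. auto. }
  unfold dca. rewrite Rabs_div_pos by nra.
  apply Rmult_le_reg_r with (K * K). nra. unfold Rdiv. rewrite Rmult_assoc, Rinv_l, Rmult_1_r by nra.
  assert (E2 : 1 <= exp (2 * C0)) by (rewrite <- exp_0; destruct (Req_dec C0 0); [lra| left; apply exp_increasing; lra]).
  assert (E := exp_le1 (- (K' - K) * t) ltac:(nra)).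
  unfold Y2.
  apply (core_bd Kth (/ w) K K' C0 (Rr1 C0) (be1 w t) (be2 w t) (be3 w t) (- (K' - K)) (exp (- (K' - K) * t)) (exp (2 * C0))); auto.
  - lra.
  - unfold Rr1; nra.
  - rewrite Rabs_Ropp, Rabs_right by lra. unfold Rdiv in H1. lra.
  - split. left; apply exp_pos. lra.
  - apply be1_bd; auto.
  - replace (/ w * / w) with (/ w ^ 2) by (field; lra). apply be2_bd; auto.
  - replace (/ w * / w * / w) with (/ w ^ 3) by (field; lra). apply be3_bd; auto.
Qed.

Lemma dcb_bd C0 K K' w t : 1 <= C0 -> 0 < w -> 0 < K -> K <= K' -> K' - K <= C0 / w -> / w <= C0 * K ->
  Rabs (dcb K K' w t) <= Y2 C0 * / w.
Proof.
  intros HC Hw HK HKK H1 H2.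
  assert (HR := hyp_Rr1 C0 K K' w HC Hw HK H1 H2).
  assert (Ha : 0 < / w) by (apply Rinv_0_lt_compat; auto).
  assert (HT := Kth_ge0).
  assert (Yp : 0 <= Y2 C0 * / w).
  { unfold Y2, Rr1. apply Rmult_le_pos; [|lra]. apply Rmult_le_pos; [|left; apply exp_pos].
    apply Rmult_le_pos. apply Rmult_le_pos; lra. nra. }
  destruct (Rle_dec t w) as [Ht|Ht]. { rewrite (proj2 (cb_zero K K' w t Hw ltac:(lra) ltac:(lra))), Rabs_R0. auto. }
  destruct (Rle_dec (2 * w) t) as [Ht2|Ht2]. { rewrite (proj2 (cb_zero K K' w t Hw ltac:(lra) ltac:(lra))), Rabs_R0. auto. }
  unfold dcb. rewrite Rabs_div_pos by nra.
  apply Rle_trans with (Y2 C0 * / w * (K * K) / (K' * K')).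
  2:{ unfold Rdiv. rewrite Rmult_assoc. rewrite <- (Rmult_1_r (Y2 C0 * / w)) at 2. apply Rmult_le_compat_l; auto.
      apply Rmult_le_reg_r with (K' * K'). nra. rewrite Rmult_assoc, Rinv_l by nra. nra. }
  unfold Rdiv. apply Rmult_le_compat_r. left; apply Rinv_0_lt_compat; nra.
  assert (E := exp_2C0 C0 K K' w t Hw ltac:(lra) ltac:(lra) H1).
  unfold Y2.
  apply (core_bd Kth (/ w) K K C0 (Rr1 C0) (al1 w t) (al2 w t) (al3 w t) (K' - K) (exp ((K' - K) * t)) (exp (2 * C0))); auto.
  - split; [lra| unfold Rr1; nra].
  - unfold Rr1; nra.
  - rewrite Rabs_right by lra. unfold Rdiv in H1. lra.
  - split. left; apply exp_pos. lra.
  - apply al1_bd; auto.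
  - replace (/ w * / w) with (/ w ^ 2) by (field; lra). apply al2_bd; auto.
  - replace (/ w * / w * / w) with (/ w ^ 3) by (field; lra). apply al3_bd; auto.
Qed.

Lemma Sep0_abs g p q x y t : Rabs (Sep 0 g p q x y t) = Rabs (g t) * Rabs (p x) * Rabs (q y).
Proof. unfold Sep. rewrite Rplus_0_l, !Rabs_mult. auto. Qed.

Lemma prod3 a b c A B C : Rabs a <= A -> Rabs b <= B -> Rabs c <= C -> Rabs a * Rabs b * Rabs c <= A * B * C.
Proof.
  intros. apply Rmult_le_compat; try apply Rabs_pos. apply Rmult_le_pos; apply Rabs_pos.
  apply Rmult_le_compat; try apply Rabs_pos; auto. auto.
Qed.

Lemma abs_cos K x : Rabs (cos (K * x)) <= 1.
Proof. apply Rabs_le. apply COS_bound. Qed.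
Lemma abs_sin K x : Rabs (sin (K * x)) <= 1.
Proof. apply Rabs_le. apply SIN_bound. Qed.
Lemma abs_dcos K x : 0 <= K -> Rabs (- K * sin (K * x)) <= K.
Proof. intros. rewrite Rabs_mult, Rabs_Ropp, Rabs_right by lra. assert (H1 := abs_sin K x).
  apply Rle_trans with (K * 1). apply Rmult_le_compat_l; lra. lra. Qed.
Lemma abs_dsin K x : 0 <= K -> Rabs (K * cos (K * x)) <= K.
Proof. intros. rewrite Rabs_mult, Rabs_right by lra. assert (H1 := abs_cos K x).
  apply Rle_trans with (K * 1). apply Rmult_le_compat_l; lra. lra. Qed.

Lemma abs_sc (g c G C : R) : Rabs g <= G -> Rabs c <= C -> Rabs (g * c) <= G * C.
Proof. intros. rewrite Rabs_mult. apply Rmult_le_compat; try apply Rabs_pos; auto. Qed.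

Definition Mb (C0 : R) : R := 2 * Rr1 C0 ^ 2 * X2 C0 + 2 * Rr1 C0 * Y2 C0.

Lemma X2_ge0 C0 : 1 <= C0 -> 0 <= X2 C0.
Proof. intros. unfold X2, Rr1. apply Rmult_le_pos; [|left; apply exp_pos]. apply Rmult_le_pos. apply Kth_ge0. nra. Qed.
Lemma Y2_ge0 C0 : 1 <= C0 -> 0 <= Y2 C0.
Proof. intros. unfold Y2, Rr1. apply Rmult_le_pos; [|left; apply exp_pos]. apply Rmult_le_pos.
  apply Rmult_le_pos. apply Kth_ge0. lra. nra. Qed.
Lemma Rr1_ge1 C0 : 1 <= Rr1 C0.
Proof. unfold Rr1. nra. Qed.

Lemma partB C0 K K' w : 1 <= C0 -> 0 < w -> 0 < K -> K <= K' -> K' - K <= C0 / w -> / w <= C0 * K ->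
  (forall i j x y t, Rabs (Amat K K' w i j x y t - delta i j) <= Mb C0 / (w * K)) /\
  (forall (d : sdir) i j x y t, Rabs (pd d (Amat K K' w i j) x y t) <= Mb C0 / w) /\
  (forall i j x y t, Rabs (pd Dt (Amat K K' w i j) x y t) <= Mb C0 / w).
Proof.
  intros HC Hw HK HKK H1 H2.
  assert (HR := hyp_Rr1 C0 K K' w HC Hw HK H1 H2).
  assert (Ha : 0 < / w) by (apply Rinv_0_lt_compat; auto).
  assert (R1g := Rr1_ge1 C0). assert (Xg := X2_ge0 C0 HC). assert (Yg := Y2_ge0 C0 HC).
  assert (CA := fun t => ca_bd C0 K K' w t HC Hw HK HKK H1 H2).
  assert (CB := fun t => cb_bd C0 K K' w t HC Hw HK HKK H1 H2).
  assert (DCA := fun t => dca_bd C0 K K' w t HC Hw HK HKK H1 H2).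
  assert (DCB := fun t => dcb_bd C0 K K' w t HC Hw HK HKK H1 H2).
  assert (Q1 : Rabs (2 * K' / K) <= 2 * Rr1 C0).
  { rewrite Rabs_div_pos by auto. rewrite Rabs_right by lra. apply Rmult_le_reg_r with K; auto.
    unfold Rdiv. rewrite Rmult_assoc, Rinv_l by lra. lra. }
  assert (Q2 : Rabs (2 * K / K') <= 2).
  { rewrite Rabs_div_pos by lra. rewrite Rabs_right by lra. apply Rmult_le_reg_r with K'; [lra|].
    unfold Rdiv. rewrite Rmult_assoc, Rinv_l by lra. lra. }
  set (G1 := X2 C0 * / w / K) in *.
  assert (G1K : G1 * K = X2 C0 * / w) by (unfold G1; field; lra).
  assert (G1K' : G1 * K' <= Rr1 C0 * (X2 C0 * / w)).
  { rewrite <- G1K. assert (0 <= G1) by (unfold G1; apply Rmult_le_pos; [apply Rmult_le_pos; lra| left; apply Rinv_0_lt_compat; lra]).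
    nra. }
  assert (G1p : 0 <= G1) by (unfold G1; apply Rmult_le_pos; [apply Rmult_le_pos; lra| left; apply Rinv_0_lt_compat; lra]).
  assert (XA : 0 <= X2 C0 * / w) by nra.
  assert (YA : 0 <= Y2 C0 * / w) by nra.
  assert (EM1 : Mb C0 / (w * K) = Mb C0 * / w / K) by (field; lra).
  assert (EM2 : Mb C0 / w = Mb C0 * / w) by (field; lra).
  assert (F1 : 0 <= Rr1 C0 * X2 C0 * (Rr1 C0 - 1)) by (apply Rmult_le_pos; [apply Rmult_le_pos|]; lra).
  assert (F2 : 0 <= Rr1 C0 * Y2 C0) by (apply Rmult_le_pos; lra).
  assert (F3 : 0 <= Rr1 C0 ^ 2 * X2 C0) by (apply Rmult_le_pos; [apply pow_le|]; lra).
  assert (F4 : 2 * Rr1 C0 * X2 C0 <= Mb C0) by (unfold Mb; simpl; simpl in F3; nra).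
  assert (F5 : 2 * Rr1 C0 ^ 2 * X2 C0 <= Mb C0) by (unfold Mb; nra).
  assert (F6 : 2 * Rr1 C0 * Y2 C0 <= Mb C0) by (unfold Mb; nra).
  assert (MG : 2 * Rr1 C0 * G1 <= Mb C0 * / w / K).
  { unfold G1. unfold Rdiv. 
    assert (0 <= / w * / K) by (apply Rmult_le_pos; left; apply Rinv_0_lt_compat; lra).
    replace (2 * Rr1 C0 * (X2 C0 * / w * / K)) with ((2 * Rr1 C0 * X2 C0) * (/ w * / K)) by ring.
    replace (Mb C0 * / w * / K) with (Mb C0 * (/ w * / K)) by ring.
    apply Rmult_le_compat_r; auto. }
  assert (MX : 2 * Rr1 C0 ^ 2 * (X2 C0 * / w) <= Mb C0 * / w).
  { rewrite <- Rmult_assoc. apply Rmult_le_compat_r; lra. }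
  assert (MY : 2 * Rr1 C0 * (Y2 C0 * / w) <= Mb C0 * / w).
  { rewrite <- Rmult_assoc. apply Rmult_le_compat_r; lra. }
  assert (RR : Rr1 C0 <= Rr1 C0 ^ 2) by (simpl; nra).
  split; [|split].
  - intros i j x y t. rewrite EM1. destruct i, j; simpl.
    { replace (1 + ca K K' w t * cos (K * x) * cos (K' * y) - 1) with (ca K K' w t * cos (K * x) * cos (K' * y)) by ring.
      rewrite !Rabs_mult. eapply Rle_trans. apply (prod3 _ _ _ G1 1 1); auto using abs_cos. nra. }
    { rewrite Rminus_0_r, (Rabs_mult _ (sin (K' * y))), (Rabs_mult _ (sin (K * x))). eapply Rle_trans.
      apply (prod3 _ _ _ (G1 * (2 * Rr1 C0)) 1 1); auto using abs_sin. apply abs_sc; auto. nra. }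
    { rewrite Rminus_0_r, (Rabs_mult _ (sin (K' * y))), (Rabs_mult _ (sin (K * x))). eapply Rle_trans.
      apply (prod3 _ _ _ (G1 * 2) 1 1); auto using abs_sin. apply abs_sc; auto. nra. }
    { replace (1 + cb K K' w t * cos (K * x) * cos (K' * y) - 1) with (cb K K' w t * cos (K * x) * cos (K' * y)) by ring.
      rewrite !Rabs_mult. eapply Rle_trans. apply (prod3 _ _ _ G1 1 1); auto using abs_cos. nra. }
  - intros d i j x y t. rewrite EM2. destruct i, j;
      [rewrite Amat_xx | rewrite Amat_xy | rewrite Amat_yx | rewrite Amat_yy]; destruct d;
      first [rewrite (Sep_dx _ _ _ _ _ (cos_d K)) | rewrite (Sep_dx _ _ _ _ _ (sin_d K))
            | rewrite (Sep_dy _ _ _ _ _ (cos_d K')) | rewrite (Sep_dy _ _ _ _ _ (sin_d K'))]; rewrite Sep0_abs.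
    { eapply Rle_trans. apply (prod3 _ _ _ G1 K 1); auto using abs_cos. apply abs_dcos; lra. nra. }
    { eapply Rle_trans. apply (prod3 _ _ _ G1 1 K'); auto using abs_cos. apply abs_dcos; lra. nra. }
    { eapply Rle_trans. apply (prod3 _ _ _ (G1 * (2 * Rr1 C0)) K 1); auto using abs_sin.
      apply abs_sc; auto. apply abs_dsin; lra. nra. }
    { eapply Rle_trans. apply (prod3 _ _ _ (G1 * (2 * Rr1 C0)) 1 K'); auto using abs_sin.
      apply abs_sc; auto. apply abs_dsin; lra. nra. }
    { eapply Rle_trans. apply (prod3 _ _ _ (G1 * 2) K 1); auto using abs_sin.
      apply abs_sc; auto. apply abs_dsin; lra. nra. }
    { eapply Rle_trans. apply (prod3 _ _ _ (G1 * (2 * K / K')) 1 K'); auto using abs_sin.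
      rewrite Rabs_mult, (Rabs_right (2*K/K')) by (left; apply Rdiv_lt_0_compat; lra). apply Rmult_le_compat_r. left; apply Rdiv_lt_0_compat; lra. auto. apply abs_dsin; lra.
      replace (G1 * (2 * K / K') * 1 * K') with (2 * (G1 * K)) by (field; lra). nra. }
    { eapply Rle_trans. apply (prod3 _ _ _ G1 K 1); auto using abs_cos. apply abs_dcos; lra. nra. }
    { eapply Rle_trans. apply (prod3 _ _ _ G1 1 K'); auto using abs_cos. apply abs_dcos; lra. nra. }
  - intros i j x y t. rewrite EM2. destruct i, j;
      [rewrite Amat_xx | rewrite Amat_xy | rewrite Amat_yx | rewrite Amat_yy].
    { rewrite (Sep_dt _ _ _ _ _ (fun t => ca_d K K' w t Hw HK)), Sep0_abs.
      eapply Rle_trans. apply (prod3 _ _ _ (Y2 C0 * / w) 1 1); auto using abs_cos. nra. }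
    { rewrite (Sep_dt _ _ _ _ _ (scal_d _ _ _ (fun t => cb_d K K' w t Hw ltac:(lra)))), Sep0_abs.
      eapply Rle_trans. apply (prod3 _ _ _ (Y2 C0 * / w * (2 * Rr1 C0)) 1 1); auto using abs_sin.
      apply abs_sc; auto. nra. }
    { rewrite (Sep_dt _ _ _ _ _ (scal_d _ _ _ (fun t => ca_d K K' w t Hw HK))), Sep0_abs.
      eapply Rle_trans. apply (prod3 _ _ _ (Y2 C0 * / w * 2) 1 1); auto using abs_sin.
      apply abs_sc; auto. nra. }
    { rewrite (Sep_dt _ _ _ _ _ (fun t => cb_d K K' w t Hw ltac:(lra))), Sep0_abs.
      eapply Rle_trans. apply (prod3 _ _ _ (Y2 C0 * / w) 1 1); auto using abs_cos. nra. }
Qed.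


Definition Wc (C0 : R) : R := 2 * Kth * C0 ^ 2 + 6 * Kth * C0 + 3 + 2 * Kth.

Lemma e_le1 K t : 0 <= K -> 0 <= t -> 0 < exp (- K * t) <= 1.
Proof. intros. split. apply exp_pos. apply exp_le1. nra. Qed.

Lemma abs4 (c u v e U V : R) : 0 <= c -> Rabs u <= U -> Rabs v <= V -> 0 < e <= 1 ->
  Rabs (c * u * v * e) <= c * U * V.
Proof.
  intros Hc Hu Hv He. rewrite !Rabs_mult, (Rabs_right c), (Rabs_right e) by lra.
  assert (0 <= U) by (eapply Rle_trans; [apply Rabs_pos|eauto]).
  assert (0 <= V) by (eapply Rle_trans; [apply Rabs_pos|eauto]).
  apply Rle_trans with (c * U * V * 1).
  apply Rmult_le_compat; try lra. apply Rmult_le_pos; [apply Rmult_le_pos|]; try lra; apply Rabs_pos.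
  apply Rmult_le_compat; try lra. apply Rmult_le_pos; lra || apply Rabs_pos. apply Rabs_pos.
  apply Rmult_le_compat_l; lra. lra.
Qed.

Lemma partC_bounds C0 K K' w x y t : 1 <= C0 -> 0 < w -> 0 < K -> K <= K' -> / w <= C0 * K -> 0 <= t ->
  Rabs (Ux K K' w x y t) <= Wc C0 * K' /\
  Rabs (Uy K K' w x y t) <= Wc C0 * K' /\
  Rabs (Ut K K' w x y t) <= Wc C0 * K' /\
  Rabs (Uxx K K' w x y t) <= Wc C0 * (K' * K') /\
  Rabs (Uyy K K' w x y t) <= Wc C0 * (K' * K') /\
  Rabs (Utx K K' w x y t) <= Wc C0 * (K' * K') /\
  Rabs (Uty K K' w x y t) <= Wc C0 * (K' * K') /\
  Rabs (Utt K K' w x y t) <= Wc C0 * (K' * K').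
Proof.
  intros HC Hw HK HKK H2 Ht.
  assert (Ha : 0 < / w) by (apply Rinv_0_lt_compat; auto).
  set (a := / w) in *.
  assert (HT := Kth_ge0).
  assert (A0 := al_bd w t). assert (B0 := be_bd w t).
  assert (A1 := al1_bd w t Hw). assert (B1 := be1_bd w t Hw).
  assert (A2 := al2_bd w t Hw). assert (B2 := be2_bd w t Hw).
  replace (/ w ^ 2) with (a * a) in A2, B2 by (unfold a; field; lra).
  fold a in A1, B1.
  assert (E1 := e_le1 K t ltac:(lra) Ht). assert (E2 := e_le1 K' t ltac:(lra) Ht).
  assert (aK : a <= C0 * K') by nra.
  assert (Ta : Kth * a <= Kth * C0 * K') by nra.
  assert (Taa : Kth * (a * a) <= Kth * C0 ^ 2 * (K' * K')).
  { assert (a * a <= C0 ^ 2 * (K' * K')) by (simpl; nra). replace (Kth * C0 ^ 2 * (K' * K')) with (Kth * (C0^2 * (K' * K'))) by ring.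
    apply Rmult_le_compat_l; auto. }
  assert (TC : 0 <= Kth * C0) by nra.
  assert (TC2 : 0 <= Kth * C0 ^ 2) by (apply Rmult_le_pos; [lra|apply pow_le; lra]).
  assert (KK : K * K <= K' * K') by nra.
  assert (W1 : (1 + Kth) <= Wc C0) by (unfold Wc; lra).
  assert (W2 : (2 + Kth) <= Wc C0) by (unfold Wc; lra).
  assert (Wp : 0 <= Wc C0) by lra.
  assert (S1 := abs_sin K x). assert (S2 := abs_sin K' y). assert (C1 := abs_cos K x). assert (C2 := abs_cos K' y).
  assert (L1 : Rabs (al1 w t - K * al w t) <= Kth * C0 * K' + K' * (1 + Kth)).
  { unfold Rminus. eapply Rle_trans. apply Rabs_triang. rewrite Rabs_Ropp, Rabs_mult, (Rabs_right K) by lra.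
    assert (K * Rabs (al w t) <= K' * (1 + Kth)) by (apply Rmult_le_compat; try lra; apply Rabs_pos). lra. }
  assert (L2 : Rabs (be1 w t - K' * be w t) <= Kth * C0 * K' + K' * (2 + Kth)).
  { unfold Rminus. eapply Rle_trans. apply Rabs_triang. rewrite Rabs_Ropp, Rabs_mult, (Rabs_right K') by lra.
    assert (K' * Rabs (be w t) <= K' * (2 + Kth)) by (apply Rmult_le_compat_l; lra). lra. }
  unfold Ux, Uy, Ut, Uxx, Uyy, Utx, Uty, Utt.
  repeat split.
  - replace (- K * al w t * sin (K * x) * exp (- K * t)) with (K * (- al w t) * sin (K * x) * exp (- K * t)) by ring.
    eapply Rle_trans. apply abs4; eauto. lra. rewrite Rabs_Ropp; eauto. nra.
  - replace (- K' * be w t * sin (K' * y) * exp (- K' * t)) with (K' * (- be w t) * sin (K' * y) * exp (- K' * t)) by ring.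
    eapply Rle_trans. apply abs4; eauto. lra. rewrite Rabs_Ropp; eauto. nra.
  - eapply Rle_trans. apply Rabs_triang.
    replace ((al1 w t - K * al w t) * cos (K * x) * exp (- K * t)) with (1 * (al1 w t - K * al w t) * cos (K * x) * exp (- K * t)) by ring.
    replace ((be1 w t - K' * be w t) * cos (K' * y) * exp (- K' * t)) with (1 * (be1 w t - K' * be w t) * cos (K' * y) * exp (- K' * t)) by ring.
    eapply Rle_trans. apply Rplus_le_compat; apply abs4; eauto; lra. unfold Wc. nra.
  - replace (- K * K * al w t * cos (K * x) * exp (- K * t)) with ((K * K) * (- al w t) * cos (K * x) * exp (- K * t)) by ring.
    eapply Rle_trans. apply abs4; eauto. nra. rewrite Rabs_Ropp; eauto.
    assert (0 <= K * K) by nra. nra.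
  - replace (- K' * K' * be w t * cos (K' * y) * exp (- K' * t)) with ((K' * K') * (- be w t) * cos (K' * y) * exp (- K' * t)) by ring.
    eapply Rle_trans. apply abs4; eauto. nra. rewrite Rabs_Ropp; eauto.
    assert (0 <= K' * K') by nra. nra.
  - replace (- K * (al1 w t - K * al w t) * sin (K * x) * exp (- K * t)) with (K * (- (al1 w t - K * al w t)) * sin (K * x) * exp (- K * t)) by ring.
    eapply Rle_trans. apply abs4; eauto. lra. rewrite Rabs_Ropp; eauto.
    assert (K * (Kth * C0 * K' + K' * (1 + Kth)) <= K' * (Kth * C0 * K' + K' * (1 + Kth))).
    { apply Rmult_le_compat_r; nra. }
    unfold Wc. nra.
  - replace (- K' * (be1 w t - K' * be w t) * sin (K' * y) * exp (- K' * t)) with (K' * (- (be1 w t - K' * be w t)) * sin (K' * y) * exp (- K' * t)) by ring.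
    eapply Rle_trans. apply abs4; eauto. lra. rewrite Rabs_Ropp; eauto.
    unfold Wc. nra.
  - assert (M1 : Rabs (al2 w t - 2 * K * al1 w t + K * K * al w t) <= Kth * C0 ^ 2 * (K' * K') + 2 * (K' * (Kth * C0 * K')) + K' * K' * (1 + Kth)).
    { eapply Rle_trans. apply Rabs_triang. eapply Rle_trans. apply Rplus_le_compat_r. unfold Rminus. apply Rabs_triang.
      rewrite Rabs_Ropp, !Rabs_mult, (Rabs_right 2), (Rabs_right K) by lra.
      assert (K * Rabs (al1 w t) <= K' * (Kth * C0 * K')) by (apply Rmult_le_compat; try lra; apply Rabs_pos).
      assert (K * K * Rabs (al w t) <= K' * K' * (1 + Kth)) by (apply Rmult_le_compat; try lra; nra || apply Rabs_pos).
      lra. }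
    assert (M2 : Rabs (be2 w t - 2 * K' * be1 w t + K' * K' * be w t) <= Kth * C0 ^ 2 * (K' * K') + 2 * (K' * (Kth * C0 * K')) + K' * K' * (2 + Kth)).
    { eapply Rle_trans. apply Rabs_triang. eapply Rle_trans. apply Rplus_le_compat_r. unfold Rminus. apply Rabs_triang.
      rewrite Rabs_Ropp, !Rabs_mult, (Rabs_right 2), (Rabs_right K') by lra.
      assert (K' * Rabs (be1 w t) <= K' * (Kth * C0 * K')) by (apply Rmult_le_compat_l; lra).
      assert (K' * K' * Rabs (be w t) <= K' * K' * (2 + Kth)) by (apply Rmult_le_compat_l; nra).
      lra. }
    eapply Rle_trans. apply Rabs_triang.
    replace ((al2 w t - 2 * K * al1 w t + K * K * al w t) * cos (K * x) * exp (- K * t)) with (1 * (al2 w t - 2 * K * al1 w t + K * K * al w t) * cos (K * x) * exp (- K * t)) by ring.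
    replace ((be2 w t - 2 * K' * be1 w t + K' * K' * be w t) * cos (K' * y) * exp (- K' * t)) with (1 * (be2 w t - 2 * K' * be1 w t + K' * K' * be w t) * cos (K' * y) * exp (- K' * t)) by ring.
    eapply Rle_trans. apply Rplus_le_compat; apply abs4; eauto; lra. unfold Wc. nra.
Qed.


Lemma Wc_ge0 C0 : 1 <= C0 -> 0 <= Wc C0.
Proof. intros. unfold Wc. assert (HT := Kth_ge0). assert (0 <= Kth * C0^2) by (apply Rmult_le_pos; [lra|apply pow_le; lra]). nra. Qed.
Lemma Mb_ge0 C0 : 1 <= C0 -> 0 <= Mb C0.
Proof. intros. unfold Mb. assert (H1 := Rr1_ge1 C0). assert (H2 := X2_ge0 C0 H). assert (H3 := Y2_ge0 C0 H).
  assert (0 <= Rr1 C0 ^ 2 * X2 C0) by (apply Rmult_le_pos; [apply pow_le|]; lra). nra. Qed.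

Lemma U000 K K' w : 0 < w -> U K K' w 0 0 0 = 1.
Proof.
  intros Hw. unfold U, al, be. rewrite !Rmult_0_r, cos_0, exp_0.
  rewrite (theta_le0 ((0 - w) / w)). replace (0 / w) with 0 by (field; lra). rewrite theta_le0 by lra. ring.
  replace ((0 - w) / w) with (-1) by (field; lra). lra.
Qed.

Theorem lemma2p1 (C0 : R) (HC0 : 1 <= C0) :
  exists M : R, forall (k k' : nat) (w : R),
    (0 < k)%nat -> (0 < k')%nat -> 0 < w ->
    0 < INR k' - INR k -> INR k' - INR k <= C0 / w -> / w <= C0 * INR k ->
    exists A : sdir -> sdir -> fn3,
      (* (a) *)
      (forall i j, is_C1 (A i j) /\ periodic2 (A i j)) /\
      (forall i j x y t, (t <= 0 \/ 2 * w <= t) -> A i j x y t = delta i j) /\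
      (forall x y t, wave_op A (u_fun k k' w) x y t = 0) /\
      (* (b) *)
      (forall i j x y t, Rabs (A i j x y t - delta i j) <= M / (w * INR k)) /\
      (forall (d : sdir) i j x y t, Rabs (pd d (A i j) x y t) <= M / w) /\
      (forall i j x y t, Rabs (pd Dt (A i j) x y t) <= M / w) /\
      (* (c) : S is any upper bound of |u| on T^2 x [0,2w], in particular the sup *)
      (forall (beta : list dir) (S : R), (length beta <= 2)%nat ->
         (forall x y t, 0 <= t <= 2 * w -> Rabs (u_fun k k' w x y t) <= S) ->
         forall x y t, 0 <= t <= 2 * w ->
           Rabs (pdl beta (u_fun k k' w) x y t) <= M * INR k' ^ length beta * S).
Proof.
  assert (Wg := Wc_ge0 C0 HC0). assert (Mg := Mb_ge0 C0 HC0).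
  exists (Mb C0 + Wc C0 + 1).
  intros k k' w Hk Hk' Hw HKK H1 H2.
  assert (HK : 0 < INR k) by (apply lt_0_INR; auto).
  assert (HK' : 0 < INR k') by (apply lt_0_INR; auto).
  set (K := INR k) in *. set (K' := INR k') in *.
  assert (HKK' : K <= K') by lra.
  destruct (partA k k' w Hw Hk Hk') as [PA1 PA2].
  destruct (partB C0 K K' w HC0 Hw HK HKK' H1 H2) as [PB1 [PB2 PB3]].
  exists (Amat K K' w).
  rewrite (u_eq k k' w Hw). fold K K'.
  assert (EMw : Mb C0 / w <= (Mb C0 + Wc C0 + 1) / w).
  { unfold Rdiv. apply Rmult_le_compat_r. left; apply Rinv_0_lt_compat; auto. lra. }
  assert (EMwk : Mb C0 / (w * K) <= (Mb C0 + Wc C0 + 1) / (w * K)).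
  { unfold Rdiv. apply Rmult_le_compat_r. left; apply Rinv_0_lt_compat; nra. lra. }
  split; [auto|]. split; [auto|]. split.
  { intros. apply wave_U; auto. }
  split. { intros. eapply Rle_trans; [apply PB1|auto]. }
  split. { intros. eapply Rle_trans; [apply PB2|auto]. }
  split. { intros. eapply Rle_trans; [apply PB3|auto]. }
  intros beta S Hl HS x y t Ht.
  assert (S1 : 1 <= S).
  { specialize (HS 0 0 0 ltac:(lra)). rewrite U000 in HS by auto. rewrite Rabs_R1 in HS. auto. }
  destruct (partC_bounds C0 K K' w x y t HC0 Hw HK HKK' H2 ltac:(lra)) as [B1 [B2 [B3 [B4 [B5 [B6 [B7 B8]]]]]]].
  assert (Fin1 : forall F, Rabs F <= Wc C0 * K' -> Rabs F <= (Mb C0 + Wc C0 + 1) * K' ^ 1 * S).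
  { intros F HF. simpl. rewrite Rmult_1_r. eapply Rle_trans. apply HF.
    assert (Wc C0 * K' <= (Mb C0 + Wc C0 + 1) * K') by (apply Rmult_le_compat_r; lra).
    assert (0 <= (Mb C0 + Wc C0 + 1) * K') by nra. nra. }
  assert (Fin2 : forall F, Rabs F <= Wc C0 * (K' * K') -> Rabs F <= (Mb C0 + Wc C0 + 1) * K' ^ 2 * S).
  { intros F HF. simpl. rewrite Rmult_1_r. eapply Rle_trans. apply HF.
    assert (0 <= K' * K') by nra.
    assert (Wc C0 * (K' * K') <= (Mb C0 + Wc C0 + 1) * (K' * K')) by (apply Rmult_le_compat_r; lra).
    assert (0 <= (Mb C0 + Wc C0 + 1) * (K' * K')) by nra. nra. }
  assert (Z : Rabs (Zf3 x y t) <= Wc C0 * (K' * K')).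
  { unfold Zf3. rewrite Rabs_R0. assert (0 <= K' * K') by nra. nra. }
  destruct beta as [|d1 [|d2 [|d3 r]]].
  - simpl. rewrite Rmult_1_r. eapply Rle_trans. apply HS; auto. nra.
  - simpl length. destruct d1; cbn [pdl].
    + rewrite pdx_U. apply Fin1; auto.
    + rewrite pdy_U. apply Fin1; auto.
    + rewrite (pdt_U K K' w Hw). apply Fin1; auto.
  - simpl length. destruct d1, d2; cbn [pdl].
    + rewrite pdx_U, pdx_Ux. apply Fin2; auto.
    + rewrite pdy_U, pdx_Uy. apply Fin2; auto.
    + rewrite (pdt_U K K' w Hw), pdx_Ut. apply Fin2; auto.
    + rewrite pdx_U, pdy_Ux. apply Fin2; auto.
    + rewrite pdy_U, pdy_Uy. apply Fin2; auto.
    + rewrite (pdt_U K K' w Hw), pdy_Ut. apply Fin2; auto.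
    + rewrite pdx_U, (pdt_Ux K K' w Hw). apply Fin2; auto.
    + rewrite pdy_U, (pdt_Uy K K' w Hw). apply Fin2; auto.
    + rewrite (pdt_U K K' w Hw), (pdt_Ut K K' w Hw). apply Fin2; auto.
  - simpl in Hl. lia.
Qed.
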